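(* Let $b_0=\frac{\sqrt2}{3\sqrt3}$, $P=D_0^3-(D_1^2+x_1^2D_n^2)D_0-b_0x_1^3D_n^3$ on $\mathbb{R}^{n+1}$, and let $\zeta_0$ be a zero of $C_0$ with $\pi<\arg\zeta_0\le\frac{19}{15}\pi$. Then there exist $R_0>0$ and $\theta_0\in(0,\pi/6]$ such that $-\frac13b_0^{-8/5}R_0^{8/5}e^{8i\theta_0/5}=\zeta_0$, and, with $\alpha=b_0^{1/5}R_0^{-1/5}e^{-i\theta_0/5}$ and $\beta=\frac13b_0^{-4/5}R_0^{4/5}e^{4i\theta_0/5}$, for every $\lambda>0$ the function $$U_\lambda(x)=\exp\big(ix_0\lambda^{1/2}R_0e^{i\theta_0}+ix_n\lambda\big)\,\mathcal{Y}(\lambda^{1/2}\alpha x_1+\beta;\zeta_0)$$ satisfies $PU_\lambda=0$ on $\mathbb{R}^{n+1}$; moreover, for each $\lambda>0$ the function $x_1\mapsto\mathcal{Y}(\lambda^{1/2}\alpha x_1+\beta;\zeta_0)$ belongs to the Schwartz space $\mathcal{S}(\mathbb{R})$, and $\sup_{\lambda>0,\,x_1\in\mathbb{R}}|\mathcal{Y}(\lambda^{1/2}\alpha x_1+\beta;\zeta_0)|<\infty$.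
   Context: $D_j=-i\partial_{x_j}$, $x=(x_0,x_1,x'',x_n)$. Arguments are taken in $[0,2\pi)$. Let $\omega=e^{2\pi i/5}$. $\mathcal{Y}(y;\zeta)$ is Sibuya's canonical solution of $w''(y)=(y^3+\zeta y)w(y)$: the unique solution entire in $(y,\zeta)$ with $\mathcal{Y}\sim y^{-3/4}\big[1+\sum_{N\ge1}B_Ny^{-N/2}\big]e^{-\frac25y^{5/2}-\zeta y^{1/2}}$ and $\mathcal{Y}'\sim y^{3/4}\big[-1+\sum_{N\ge1}C_Ny^{-N/2}\big]e^{-\frac25y^{5/2}-\zeta y^{1/2}}$ as $y\to\infty$ in closed subsectors of $|\arg y|<3\pi/5$, uniformly for $\zeta$ in compacts ($B_N,C_N$ polynomials in $\zeta$, principal branches). With $\mathcal{Y}_k(y;\zeta)=\mathcal{Y}(\omega^{-k}y;\omega^{-2k}\zeta)$, the Stokes coefficient $C_0(\zeta)$ is defined by $\mathcal{Y}_0=C_0(\zeta)\mathcal{Y}_1+\tilde C_0(\zeta)\mathcal{Y}_2$ (with $\tilde C_0\equiv-\omega$); $C_0$ is entire. Complex powers of $b_0,R_0$ are positive real powers. *)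

(* Defs.v *)
From Stdlib Require Import Reals Lra List.
Open Scope R_scope.

Definition Cx : Type := (R * R)%type.
Definition RtoC (r : R) : Cx := (r, 0).
Definition C0 : Cx := (0, 0).
Definition C1 : Cx := (1, 0).
Definition Ci : Cx := (0, 1).
Definition Cadd (z w : Cx) : Cx := (fst z + fst w, snd z + snd w).
Definition Copp (z : Cx) : Cx := (- fst z, - snd z).
Definition Csub (z w : Cx) : Cx := Cadd z (Copp w).
Definition Cmul (z w : Cx) : Cx :=
  (fst z * fst w - snd z * snd w, fst z * snd w + snd z * fst w).
Definition Cnorm (z : Cx) : R := sqrt (fst z * fst z + snd z * snd z).
Definition Cexp (z : Cx) : Cx := (exp (fst z) * cos (snd z), exp (fst z) * sin (snd z)).

Fixpoint Cpown (z : Cx) (k : nat) : Cx :=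
  match k with O => C1 | S k => Cmul z (Cpown z k) end.

(* principal argument, in (-PI, PI] *)
Definition Arg (z : Cx) : R :=
  let a := fst z in let b := snd z in
  if Rlt_dec 0 a then atan (b / a)
  else if Rlt_dec a 0 then
         (if Rle_dec 0 b then atan (b / a) + PI else atan (b / a) - PI)
  else if Rlt_dec 0 b then PI / 2
  else if Rlt_dec b 0 then - (PI / 2) else 0.

(* principal branch of z^w (z <> 0); set to 0 at z = 0 *)
Definition Cpow (z w : Cx) : Cx :=
  if Rlt_dec 0 (Cnorm z) then Cexp (Cmul w (ln (Cnorm z), Arg z)) else C0.

(* "arg z lies in (a, b]" with the paper's convention arg in [0, 2 PI),
   for 0 <= a < b < 2 PI *)
Definition arg_in (z : Cx) (a b : R) : Prop :=
  z <> C0 /\ exists th, a < th <= b /\ z = Cmul (RtoC (Cnorm z)) (Cexp (0, th)).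

(* polynomial in one complex variable, coefficient list (constant first) *)
Definition Cpoly (l : list Cx) (z : Cx) : Cx :=
  fold_right (fun a acc => Cadd a (Cmul z acc)) C0 l.

(* sum_{N=1}^{M} f N *)
Fixpoint Csum1 (f : nat -> Cx) (M : nat) : Cx :=
  match M with O => C0 | S M' => Cadd (Csum1 f M') (f M) end.

Definition Cderiv (g : Cx -> Cx) (z L : Cx) : Prop :=
  forall eps, 0 < eps -> exists delta, 0 < delta /\
    forall h : Cx, 0 < Cnorm h < delta ->
      Cnorm (Csub (Csub (g (Cadd z h)) (g z)) (Cmul L h)) <= eps * Cnorm h.

Definition entire2 (f : Cx -> Cx -> Cx) : Prop :=
  forall y z, exists a b : Cx, forall eps, 0 < eps -> exists delta, 0 < delta /\
    forall h k : Cx, Cnorm h + Cnorm k < delta ->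
      Cnorm (Csub (Csub (Csub (f (Cadd y h) (Cadd z k)) (f y z)) (Cmul a h)) (Cmul b k))
        <= eps * (Cnorm h + Cnorm k).

Definition RCderiv (g : R -> Cx) (t : R) (L : Cx) : Prop :=
  forall eps, 0 < eps -> exists delta, 0 < delta /\
    forall h : R, 0 < Rabs h < delta ->
      Cnorm (Csub (Csub (g (t + h)) (g t)) (Cmul (RtoC h) L)) <= eps * Rabs h.

Definition in_subsector (delta : R) (y : Cx) : Prop :=
  y <> C0 /\ Rabs (Arg y) <= 3 * PI / 5 - delta.

(* e^{2/5 y^{5/2} + zeta y^{1/2}} (reciprocal of the exponential factor) *)
Definition Efac (y zeta : Cx) : Cx :=
  Cexp (Cadd (Cmul (RtoC (2/5)) (Cpow y (RtoC (5/2)))) (Cmul zeta (Cpow y (RtoC (1/2))))).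

(* g(y;zeta) ~ y^p [s + sum_{N>=1} Cf_N(zeta) y^{-N/2}] e^{-2/5 y^{5/2} - zeta y^{1/2}}
   as y -> oo in closed subsectors of |arg y| < 3PI/5, uniformly for zeta in compacts
   (every compact set lies in a closed disc |zeta| <= r). *)
Definition asympt (g : Cx -> Cx -> Cx) (p : R) (s : Cx) (Cf : nat -> list Cx) : Prop :=
  forall delta r : R, 0 < delta -> forall M : nat,
    exists K y0 : R, forall y zeta : Cx,
      in_subsector delta y -> y0 <= Cnorm y -> Cnorm zeta <= r ->
      Cnorm (Csub (Cmul (Cmul (g y zeta) (Cpow y (RtoC (- p)))) (Efac y zeta))
                  (Cadd s (Csum1 (fun N => Cmul (Cpoly (Cf N) zeta)
                                               (Cpow y (RtoC (- INR N / 2)))) M)))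
        <= K * Rpower (Cnorm y) (- (INR M + 1) / 2).

Definition IsSibuya (Y : Cx -> Cx -> Cx) : Prop :=
  entire2 Y /\
  exists Yp Ypp : Cx -> Cx -> Cx,
    (forall y zeta, Cderiv (fun w => Y w zeta) y (Yp y zeta)) /\
    (forall y zeta, Cderiv (fun w => Yp w zeta) y (Ypp y zeta)) /\
    (forall y zeta, Ypp y zeta =
        Cmul (Cadd (Cpown y 3) (Cmul zeta y)) (Y y zeta)) /\
    (exists B : nat -> list Cx, asympt Y (- (3/4)) C1 B) /\
    (exists Cc : nat -> list Cx, asympt Yp (3/4) (Copp C1) Cc).

Definition omega : Cx := Cexp (0, 2 * PI / 5).
Definition Cinvomega : Cx := Cexp (0, - (2 * PI / 5)).

Definition Yk (Y : Cx -> Cx -> Cx) (k : nat) (y zeta : Cx) : Cx :=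
  Y (Cmul (Cpown Cinvomega k) y) (Cmul (Cpown Cinvomega (2 * k)) zeta).

(* Stokes coefficient: C0(zeta) = c means Y_0 = c Y_1 + Cx~_0 Y_2 for some Cx~_0 *)
Definition StokesC0 (Y : Cx -> Cx -> Cx) (zeta c : Cx) : Prop :=
  exists ct : Cx, forall y : Cx,
    Yk Y 0 y zeta = Cadd (Cmul c (Yk Y 1 y zeta)) (Cmul ct (Yk Y 2 y zeta)).

(* points of R^{n+1}: x : nat -> R, coordinates x 0, ..., x n *)
Definition upd (x : nat -> R) (j : nat) (t : R) : nat -> R :=
  fun k => if Nat.eqb k j then t else x k.

Definition HasPartial (j : nat) (f g : (nat -> R) -> Cx) : Prop :=
  forall x, RCderiv (fun t => f (upd x j t)) (x j) (g x).

Definition HasD (j : nat) (f g : (nat -> R) -> Cx) : Prop :=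
  exists h, HasPartial j f h /\ forall x, g x = Cmul (Copp Ci) (h x).

Definition b0 : R := sqrt 2 / (3 * sqrt 3).

Definition P_annihilates (n : nat) (U : (nat -> R) -> Cx) : Prop :=
  exists U0 U00 U000 U01 U011 U0n U0nn Un Unn Unnn : (nat -> R) -> Cx,
    HasD 0 U U0 /\ HasD 0 U0 U00 /\ HasD 0 U00 U000 /\
    HasD 1 U0 U01 /\ HasD 1 U01 U011 /\
    HasD n U0 U0n /\ HasD n U0n U0nn /\
    HasD n U Un /\ HasD n Un Unn /\ HasD n Unn Unnn /\
    forall x, Csub (Csub (U000 x)
                         (Cadd (U011 x) (Cmul (RtoC (x 1%nat ^ 2)) (U0nn x))))
                   (Cmul (RtoC (b0 * x 1%nat ^ 3)) (Unnn x)) = C0.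

Definition InSchwartz (f : R -> Cx) : Prop :=
  exists F : nat -> R -> Cx,
    (forall t, F 0%nat t = f t) /\
    (forall m t, RCderiv (F m) t (F (S m) t)) /\
    (forall k m : nat, exists Mb, forall t, Rabs t ^ k * Cnorm (F m t) <= Mb).

(* Main.v *)
Require Import Defs.
From Stdlib Require Import Reals Lra Lia Psatz Ring Field List.
Require Import Defs.
Open Scope R_scope.


Lemma Cx_ring_th : ring_theory C0 C1 Cadd Cmul Csub Copp (@eq Cx).
Proof.
  constructor; intros;
  repeat match goal with z : Cx |- _ => destruct z end;
  unfold Csub, Cadd, Cmul, Copp, C0, C1; simpl; f_equal; ring.
Qed.
Add Ring Cxring : Cx_ring_th.


Ltac cx := repeat match goal with z : Cx |- _ => destruct z end;
  unfold Csub, Cadd, Cmul, Copp, C0, C1, RtoC, Ci; simpl; f_equal; ring.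

Lemma RtoC_mul a b : RtoC (a * b) = Cmul (RtoC a) (RtoC b).
Proof. unfold RtoC, Cmul; simpl; f_equal; ring. Qed.
Lemma RtoC_add a b : RtoC (a + b) = Cadd (RtoC a) (RtoC b).
Proof. unfold RtoC, Cadd; simpl; f_equal; ring. Qed.
Lemma RtoC_opp a : RtoC (- a) = Copp (RtoC a).
Proof. unfold RtoC, Copp; simpl; f_equal; ring. Qed.
Lemma RtoC_sub a b : RtoC (a - b) = Csub (RtoC a) (RtoC b).
Proof. unfold RtoC, Csub, Cadd, Copp; simpl; f_equal; ring. Qed.
Lemma RtoC_1 : RtoC 1 = C1. Proof. reflexivity. Qed.
Lemma RtoC_0 : RtoC 0 = C0. Proof. reflexivity. Qed.
Lemma RtoC_pow a k : RtoC (a ^ k) = Cpown (RtoC a) k.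
Proof. induction k; simpl. reflexivity. rewrite RtoC_mul, IHk; reflexivity. Qed.
Lemma Cpown_mul z w k : Cpown (Cmul z w) k = Cmul (Cpown z k) (Cpown w k).
Proof. induction k; simpl. cx. rewrite IHk; ring. Qed.
Lemma Cpown_add z a b : Cpown z (a + b) = Cmul (Cpown z a) (Cpown z b).
Proof. induction a; simpl. ring. rewrite IHa; ring. Qed.
Lemma Cpown_S z k : Cpown z (S k) = Cmul z (Cpown z k). Proof. reflexivity. Qed.

Lemma Cnorm_ge0 z : 0 <= Cnorm z.
Proof. apply sqrt_pos. Qed.
Lemma Cnorm_mul z w : Cnorm (Cmul z w) = Cnorm z * Cnorm w.
Proof.
  destruct z as [a b], w as [c d]; unfold Cnorm, Cmul; simpl.
  rewrite <- sqrt_mult by nra. f_equal; ring.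
Qed.
Lemma Cnorm_RtoC a : Cnorm (RtoC a) = Rabs a.
Proof. unfold Cnorm, RtoC; simpl. rewrite Rmult_0_l, Rplus_0_r. apply sqrt_Rsqr_abs. Qed.
Lemma Cnorm_opp z : Cnorm (Copp z) = Cnorm z.
Proof. destruct z; unfold Cnorm, Copp; simpl; f_equal; ring. Qed.
Lemma Cnorm_C0 : Cnorm C0 = 0.
Proof. unfold Cnorm, C0; simpl. replace (0*0+0*0) with 0 by ring; apply sqrt_0. Qed.
Lemma Cnorm_C1 : Cnorm C1 = 1.
Proof. unfold Cnorm, C1; simpl. replace (1*1+0*0) with 1 by ring; apply sqrt_1. Qed.
Lemma Cnorm_tri z w : Cnorm (Cadd z w) <= Cnorm z + Cnorm w.
Proof.
  destruct z as [a b], w as [c d]; unfold Cnorm, Cadd; simpl.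
  set (A := a*a+b*b); set (B := c*c+d*d).
  assert (HA : 0 <= A) by (unfold A; nra). assert (HB : 0 <= B) by (unfold B; nra).
  assert (Hsq : (a*c+b*d) <= sqrt A * sqrt B).
  { rewrite <- sqrt_mult by auto.
    destruct (Rle_dec (a*c+b*d) 0). pose proof (sqrt_pos (A*B)); lra.
    rewrite <- (sqrt_Rsqr (a*c+b*d)) by lra. apply sqrt_le_1_alt.
    unfold Rsqr, A, B. pose proof (Rle_0_sqr (a*d-b*c)). unfold Rsqr in *. nra. }
  apply Rsqr_incr_0.
  - unfold Rsqr. rewrite sqrt_sqrt by (apply Rplus_le_le_0_compat; apply Rle_0_sqr).
    replace ((sqrt A + sqrt B) * (sqrt A + sqrt B)) with
      (sqrt A * sqrt A + sqrt B * sqrt B + 2 * (sqrt A * sqrt B)) by ring.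
    rewrite !sqrt_sqrt by auto. unfold A, B in *. nra.
  - apply sqrt_pos.
  - pose proof (sqrt_pos A); pose proof (sqrt_pos B); lra.
Qed.
Lemma Cnorm_sub_tri z w : Cnorm (Csub z w) <= Cnorm z + Cnorm w.
Proof. unfold Csub. rewrite <- (Cnorm_opp w). apply Cnorm_tri. Qed.
Lemma Cnorm_rev_tri z w : Cnorm z - Cnorm w <= Cnorm (Cadd z w).
Proof.
  assert (z = Cadd (Cadd z w) (Copp w)) by ring.
  pose proof (Cnorm_tri (Cadd z w) (Copp w)). rewrite <- H in H0.
  rewrite Cnorm_opp in H0. lra.
Qed.
Lemma Cnorm_fst z : Rabs (fst z) <= Cnorm z.
Proof.
  destruct z as [a b]; unfold Cnorm; simpl.
  rewrite <- sqrt_Rsqr_abs. apply sqrt_le_1_alt. unfold Rsqr; nra.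
Qed.
Lemma Cnorm_snd z : Rabs (snd z) <= Cnorm z.
Proof.
  destruct z as [a b]; unfold Cnorm; simpl.
  rewrite <- sqrt_Rsqr_abs. apply sqrt_le_1_alt. unfold Rsqr; nra.
Qed.
Lemma Cnorm_le_comp z : Cnorm z <= Rabs (fst z) + Rabs (snd z).
Proof.
  destruct z as [a b]; simpl. replace (a,b) with (Cadd (RtoC a) (Cmul Ci (RtoC b))) by cx.
  eapply Rle_trans. apply Cnorm_tri. rewrite Cnorm_mul, !Cnorm_RtoC.
  assert (Cnorm Ci = 1) by (unfold Cnorm, Ci; simpl; replace (0*0+1*1) with 1 by ring; apply sqrt_1).
  rewrite H; lra.
Qed.
Lemma Cnorm_eq0 z : Cnorm z = 0 -> z = C0.
Proof.
  destruct z as [a b]; unfold Cnorm; simpl; intro H.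
  assert (a*a+b*b = 0) by (apply sqrt_eq_0; [nra | exact H]). unfold C0; f_equal; nra.
Qed.
Lemma Cnorm_pown z k : Cnorm (Cpown z k) = Cnorm z ^ k.
Proof. induction k; simpl. apply Cnorm_C1. rewrite Cnorm_mul, IHk; ring. Qed.

Lemma Cexp_add z w : Cexp (Cadd z w) = Cmul (Cexp z) (Cexp w).
Proof.
  destruct z as [a b], w as [c d]; unfold Cexp, Cadd, Cmul; simpl.
  rewrite exp_plus, cos_plus, sin_plus. f_equal; ring.
Qed.
Lemma Cnorm_Cexp z : Cnorm (Cexp z) = exp (fst z).
Proof.
  destruct z as [a b]; unfold Cnorm, Cexp; simpl.
  replace (exp a * cos b * (exp a * cos b) + exp a * sin b * (exp a * sin b))
    with (exp a * exp a * (sin b * sin b + cos b * cos b)) by ring.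
  pose proof (sin2_cos2 b). unfold Rsqr in H. rewrite H, Rmult_1_r.
  apply sqrt_square. pose proof (exp_pos a); lra.
Qed.
Lemma Cexp_0 : Cexp C0 = C1.
Proof. unfold Cexp, C0, C1; simpl. rewrite exp_0, cos_0, sin_0. f_equal; ring. Qed.
Lemma Cexp_ne0 z : Cexp z <> C0.
Proof. intro H. pose proof (Cnorm_Cexp z). rewrite H, Cnorm_C0 in H0. pose proof (exp_pos (fst z)); lra. Qed.
Lemma Cexp_pown z k : Cpown (Cexp z) k = Cexp (Cmul (RtoC (INR k)) z).
Proof.
  induction k. simpl. rewrite <- Cexp_0. f_equal. cx.
  rewrite Cpown_S, IHk, <- Cexp_add. f_equal. rewrite S_INR, RtoC_add, RtoC_1. ring.
Qed.
Lemma Cexp_i_add a b : Cexp (0, a + b) = Cmul (Cexp (0, a)) (Cexp (0, b)).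
Proof. rewrite <- Cexp_add. f_equal. unfold Cadd; simpl; f_equal; ring. Qed.
Lemma Cnorm_Cexp_i a : Cnorm (Cexp (0, a)) = 1.
Proof. rewrite Cnorm_Cexp; simpl. apply exp_0. Qed.
Lemma Cexp_i_pown a k : Cpown (Cexp (0, a)) k = Cexp (0, INR k * a).
Proof. rewrite Cexp_pown. f_equal. unfold Cmul, RtoC; simpl; f_equal; ring. Qed.
Lemma Cexp_i_inv a : Cmul (Cexp (0, a)) (Cexp (0, - a)) = C1.
Proof. rewrite <- Cexp_i_add, Rplus_opp_r. apply Cexp_0. Qed.
Lemma Cexp_PI : Cexp (0, PI) = Copp C1.
Proof. unfold Cexp, Copp, C1; simpl. rewrite exp_0, cos_PI, sin_PI. f_equal; ring. Qed.


Lemma RC_comp g t L :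
  RCderiv g t L <->
  derivable_pt_lim (fun s => fst (g s)) t (fst L) /\
  derivable_pt_lim (fun s => snd (g s)) t (snd L).
Proof.
  split.
  - intro H. split; intros eps Heps;
    destruct (H (eps/2)) as [d [Hd Hh]]; try lra;
    exists (mkposreal d Hd); intros h Hh0 Hhd; simpl in Hhd;
    assert (0 < Rabs h < d) by (split; [apply Rabs_pos_lt|]; auto);
    specialize (Hh h H0).
    + pose proof (Cnorm_fst (Csub (Csub (g (t + h)) (g t)) (Cmul (RtoC h) L))) as Hf.
      destruct (g (t+h)), (g t), L; unfold Csub, Cadd, Copp, Cmul, RtoC in Hf, Hh; simpl in *.
      replace ((r - r1) / h - r3) with ((r + - r1 + - (h * r3 - 0 * r4)) / h) by (field; auto).
      unfold Rdiv. rewrite Rabs_mult, Rabs_inv. 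
      apply Rmult_lt_reg_r with (Rabs h). apply Rabs_pos_lt; auto.
      rewrite Rmult_assoc, Rinv_l by (apply Rabs_no_R0; auto). pose proof (Rabs_pos_lt h Hh0). nra.
    + pose proof (Cnorm_snd (Csub (Csub (g (t + h)) (g t)) (Cmul (RtoC h) L))) as Hf.
      destruct (g (t+h)), (g t), L; unfold Csub, Cadd, Copp, Cmul, RtoC in Hf, Hh; simpl in *.
      replace ((r0 - r2) / h - r4) with ((r0 + - r2 + - (h * r4 + 0 * r3)) / h) by (field; auto).
      unfold Rdiv. rewrite Rabs_mult, Rabs_inv. 
      apply Rmult_lt_reg_r with (Rabs h). apply Rabs_pos_lt; auto.
      rewrite Rmult_assoc, Rinv_l by (apply Rabs_no_R0; auto). pose proof (Rabs_pos_lt h Hh0). nra.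
  - intros [H1 H2] eps Heps.
    destruct (H1 (eps/2)) as [d1 Hd1]; try lra.
    destruct (H2 (eps/2)) as [d2 Hd2]; try lra.
    exists (Rmin d1 d2). split. apply Rmin_pos; apply cond_pos.
    intros h [Hh0 Hhd].
    assert (hne : h <> 0) by (intro; subst; rewrite Rabs_R0 in Hh0; lra).
    assert (Hd1' : Rabs h < d1) by (pose proof (Rmin_l d1 d2); lra).
    assert (Hd2' : Rabs h < d2) by (pose proof (Rmin_r d1 d2); lra).
    specialize (Hd1 h hne Hd1'); specialize (Hd2 h hne Hd2').
    eapply Rle_trans. apply Cnorm_le_comp.
    destruct (g (t+h)) as [p q], (g t) as [p' q'], L as [l1 l2]; simpl in *.
    replace (p + - p' + - (h * l1 - 0 * l2)) with (((p - p')/h - l1) * h) by (field; auto).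
    replace (q + - q' + - (h * l2 + 0 * l1)) with (((q - q')/h - l2) * h) by (field; auto).
    rewrite !Rabs_mult. nra.
Qed.

Lemma RC_ext f g t L : (forall s, f s = g s) -> RCderiv f t L -> RCderiv g t L.
Proof.
  intros E H eps He. destruct (H eps He) as [d [Hd Hh]]. exists d; split; auto.
  intros h Hh'. rewrite <- !E. auto.
Qed.
Lemma RC_ext_L f t L L' : L = L' -> RCderiv f t L -> RCderiv f t L'.
Proof. intros; subst; auto. Qed.



Lemma dpl_ext f g x l : (forall s, f s = g s) -> derivable_pt_lim f x l -> derivable_pt_lim g x l.
Proof.
  intros E H eps He. destruct (H eps He) as [d Hd]. exists d. intros. rewrite <- !E. auto.
Qed.
Lemma dpl_L f x l l' : l = l' -> derivable_pt_lim f x l -> derivable_pt_lim f x l'.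
Proof. intros; subst; auto. Qed.

Lemma RC_mul f g t Lf Lg : RCderiv f t Lf -> RCderiv g t Lg ->
  RCderiv (fun s => Cmul (f s) (g s)) t (Cadd (Cmul Lf (g t)) (Cmul (f t) Lg)).
Proof.
  rewrite !RC_comp. intros [F1 F2] [G1 G2]. unfold Cmul, Cadd; simpl.
  pose proof (derivable_pt_lim_mult _ _ _ _ _ F1 G1) as M11.
  pose proof (derivable_pt_lim_mult _ _ _ _ _ F2 G2) as M22.
  pose proof (derivable_pt_lim_mult _ _ _ _ _ F1 G2) as M12.
  pose proof (derivable_pt_lim_mult _ _ _ _ _ F2 G1) as M21.
  split.
  - pose proof (derivable_pt_lim_minus _ _ _ _ _ M11 M22) as M.
    refine (dpl_L _ _ _ _ _ (dpl_ext _ _ _ _ _ M)); [ring | intro s; reflexivity].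
  - pose proof (derivable_pt_lim_plus _ _ _ _ _ M12 M21) as M.
    refine (dpl_L _ _ _ _ _ (dpl_ext _ _ _ _ _ M)); [ring | intro s; reflexivity].
Qed.

Lemma RC_add f g t Lf Lg : RCderiv f t Lf -> RCderiv g t Lg ->
  RCderiv (fun s => Cadd (f s) (g s)) t (Cadd Lf Lg).
Proof.
  rewrite !RC_comp. intros [F1 F2] [G1 G2]. unfold Cadd; simpl. split.
  - apply (derivable_pt_lim_plus _ _ _ _ _ F1 G1).
  - apply (derivable_pt_lim_plus _ _ _ _ _ F2 G2).
Qed.

Lemma RC_const k t : RCderiv (fun _ => k) t C0.
Proof.
  rewrite RC_comp; simpl; split; apply derivable_pt_lim_const.
Qed.

Lemma RC_scale k f t L : RCderiv f t L -> RCderiv (fun s => Cmul k (f s)) t (Cmul k L).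
Proof.
  intro H. eapply RC_ext_L; [| apply (RC_mul (fun _ => k) f t C0 L (RC_const k t) H)].
  ring.
Qed.

Lemma dpl_lin a b t : derivable_pt_lim (fun s => s * a + b) t a.
Proof.
  intros eps He. exists (mkposreal 1 Rlt_0_1). intros h Hh _.
  replace (((t + h) * a + b - (t * a + b)) / h - a) with 0 by (field; auto).
  rewrite Rabs_R0; auto.
Qed.

Lemma RC_cexp k d t :
  RCderiv (fun s => Cexp (Cadd (Cmul (RtoC s) k) d)) t
          (Cmul k (Cexp (Cadd (Cmul (RtoC t) k) d))).
Proof.
  destruct k as [k1 k2], d as [d1 d2].
  rewrite RC_comp; unfold Cexp, Cadd, Cmul, RtoC; simpl.
  pose proof (derivable_pt_lim_comp _ exp _ _ _ (dpl_lin k1 d1 t) (derivable_pt_lim_exp _)) as A1.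
  pose proof (derivable_pt_lim_comp _ cos _ _ _ (dpl_lin k2 d2 t) (derivable_pt_lim_cos _)) as A2.
  pose proof (derivable_pt_lim_comp _ sin _ _ _ (dpl_lin k2 d2 t) (derivable_pt_lim_sin _)) as A3.
  pose proof (derivable_pt_lim_mult _ _ _ _ _ A1 A2) as M1.
  pose proof (derivable_pt_lim_mult _ _ _ _ _ A1 A3) as M2.
  split.
  - refine (dpl_L _ _ _ _ _ (dpl_ext _ _ _ _ _ M1)); [| intro s; unfold comp, mult_fct; simpl; f_equal; f_equal; ring].
    unfold comp; simpl. replace (t * k1 - 0 * k2 + d1) with (t * k1 + d1) by ring.
    replace (t * k2 + 0 * k1 + d2) with (t * k2 + d2) by ring. ring.
  - refine (dpl_L _ _ _ _ _ (dpl_ext _ _ _ _ _ M2)); [| intro s; unfold comp, mult_fct; simpl; f_equal; f_equal; ring].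
    unfold comp; simpl. replace (t * k1 - 0 * k2 + d1) with (t * k1 + d1) by ring.
    replace (t * k2 + 0 * k1 + d2) with (t * k2 + d2) by ring. ring.
Qed.

Lemma RC_chain g c d t L :
  Cderiv g (Cadd (Cmul (RtoC t) c) d) L ->
  RCderiv (fun s => g (Cadd (Cmul (RtoC s) c) d)) t (Cmul c L).
Proof.
  intro H.
  destruct (Req_dec (Cnorm c) 0) as [Hc | Hc].
  - apply Cnorm_eq0 in Hc. subst c.
    eapply RC_ext_L; [| eapply RC_ext; [| apply (RC_const (g (Cadd (Cmul (RtoC t) C0) d)))]].
    ring. intro s. simpl. f_equal. ring.
  - pose proof (Cnorm_ge0 c).
    intros eps He. destruct (H (eps / Cnorm c)) as [dl [Hdl Hh]].
    { apply Rdiv_lt_0_compat; lra. }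
    exists (dl / Cnorm c). split. apply Rdiv_lt_0_compat; lra.
    intros h [Hh0 Hhd].
    specialize (Hh (Cmul (RtoC h) c)).
    rewrite Cnorm_mul, Cnorm_RtoC in Hh.
    assert (E : Cadd (Cmul (RtoC (t + h)) c) d =
                Cadd (Cadd (Cmul (RtoC t) c) d) (Cmul (RtoC h) c))
      by (rewrite RtoC_add; ring).
    rewrite E.
    replace (Cmul (RtoC h) (Cmul c L)) with (Cmul L (Cmul (RtoC h) c)) by ring.
    eapply Rle_trans. apply Hh. split. apply Rmult_lt_0_compat; lra.
    apply Rmult_lt_reg_r with (/ Cnorm c). apply Rinv_0_lt_compat; lra.
    rewrite Rmult_assoc, Rinv_r by lra. unfold Rdiv in Hhd. lra.
    right. field. lra.
Qed.


Fixpoint padd (p q : list Cx) : list Cx :=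
  match p, q with
  | nil, _ => q
  | _, nil => p
  | a :: p', b :: q' => Cadd a b :: padd p' q'
  end.
Definition pscale (k : Cx) (p : list Cx) := map (Cmul k) p.
Fixpoint pderiv (p : list Cx) : list Cx :=
  match p with nil => nil | a :: p' => padd p' (C0 :: pderiv p') end.

Lemma Cpoly_cons a p z : Cpoly (a :: p) z = Cadd a (Cmul z (Cpoly p z)).
Proof. reflexivity. Qed.
Lemma Cpoly_nil z : Cpoly nil z = C0.
Proof. reflexivity. Qed.
Lemma Cpoly_padd p q z : Cpoly (padd p q) z = Cadd (Cpoly p z) (Cpoly q z).
Proof.
  revert q; induction p as [|a p IH]; intros [|b q]; simpl; try ring.
  rewrite IH. ring.
Qed.
Lemma Cpoly_pscale k p z : Cpoly (pscale k p) z = Cmul k (Cpoly p z).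
Proof. induction p; simpl. ring. rewrite IHp. ring. Qed.

Definition ell (c d : Cx) (s : R) : Cx := Cadd (Cmul (RtoC s) c) d.

Lemma RC_ell c d t : RCderiv (ell c d) t c.
Proof.
  unfold ell. rewrite RC_comp. destruct c as [c1 c2], d as [d1 d2].
  unfold Cadd, Cmul, RtoC; simpl. split.
  - eapply dpl_ext; [| apply (dpl_lin c1 d1)]. intro; simpl; ring.
  - eapply dpl_ext; [| apply (dpl_lin c2 d2)]. intro; simpl; ring.
Qed.

Lemma RC_poly p c d t :
  RCderiv (fun s => Cpoly p (ell c d s)) t (Cmul c (Cpoly (pderiv p) (ell c d t))).
Proof.
  induction p as [|a p IH]; simpl.
  - eapply RC_ext_L; [| apply RC_const]. ring.
  - pose proof (RC_add _ _ t _ _ (RC_const a t)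
       (RC_mul _ _ t _ _ (RC_ell c d t) IH)) as H.
    eapply RC_ext_L; [| exact H]. rewrite Cpoly_padd. simpl. ring.
Qed.

Section Phi.
Variables (G H : Cx -> Cx) (zeta c d : Cx).
Hypothesis HG : forall s, Cderiv G s (H s).
Hypothesis HH : forall s, Cderiv H s (Cmul (Cadd (Cpown s 3) (Cmul zeta s)) (G s)).

Definition pmulV (q : list Cx) := padd (C0 :: C0 :: C0 :: q) (pscale zeta (C0 :: q)).
Lemma Cpoly_pmulV q z : Cpoly (pmulV q) z = Cmul (Cadd (Cpown z 3) (Cmul zeta z)) (Cpoly q z).
Proof. unfold pmulV. rewrite Cpoly_padd, Cpoly_pscale. simpl. ring. Qed.

Definition Phi (PQ : list Cx * list Cx) (t : R) : Cx :=
  Cadd (Cmul (Cpoly (fst PQ) (ell c d t)) (G (ell c d t)))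
       (Cmul (Cpoly (snd PQ) (ell c d t)) (H (ell c d t))).
Definition Dstep (PQ : list Cx * list Cx) : list Cx * list Cx :=
  (pscale c (padd (pderiv (fst PQ)) (pmulV (snd PQ))),
   pscale c (padd (fst PQ) (pderiv (snd PQ)))).

Lemma RC_Phi PQ t : RCderiv (Phi PQ) t (Phi (Dstep PQ) t).
Proof.
  unfold Phi.
  pose proof (RC_chain G c d t _ (HG (ell c d t))) as DG.
  pose proof (RC_chain H c d t _ (HH (ell c d t))) as DH.
  pose proof (RC_add _ _ t _ _ (RC_mul _ _ t _ _ (RC_poly (fst PQ) c d t) DG)
                              (RC_mul _ _ t _ _ (RC_poly (snd PQ) c d t) DH)) as D.
  eapply RC_ext_L; [| exact D].
  unfold Dstep; cbn [fst snd]. rewrite !Cpoly_pscale, !Cpoly_padd, Cpoly_pmulV. unfold ell. ring.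
Qed.

Definition Fseq (m : nat) : R -> Cx := Phi (Nat.iter m Dstep (C1 :: nil, nil)).

Lemma Fseq_deriv m t : RCderiv (Fseq m) t (Fseq (S m) t).
Proof. unfold Fseq. simpl. apply RC_Phi. Qed.
Lemma Fseq_0 t : Fseq 0 t = G (ell c d t).
Proof. unfold Fseq, Phi; simpl. ring. Qed.
End Phi.

Fixpoint psum (p : list Cx) : R :=
  match p with nil => 0 | a :: p' => Cnorm a + psum p' end.
Lemma psum_ge0 p : 0 <= psum p.
Proof. induction p; simpl. lra. pose proof (Cnorm_ge0 a); lra. Qed.
Lemma Cpoly_bound p z : Cnorm (Cpoly p z) <= psum p * (1 + Cnorm z) ^ length p.
Proof.
  induction p as [|a p IH]; simpl.
  - rewrite Cnorm_C0. lra.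
  - pose proof (Cnorm_ge0 z). pose proof (Cnorm_ge0 a). pose proof (psum_ge0 p).
    assert (1 <= (1 + Cnorm z) ^ length p) by (apply pow_R1_Rle; lra).
    eapply Rle_trans. apply Cnorm_tri. rewrite Cnorm_mul.
    assert (Cnorm z * Cnorm (Cpoly p z) <= (1 + Cnorm z) * (psum p * (1 + Cnorm z) ^ length p)).
    { apply Rmult_le_compat; try lra. apply Cnorm_ge0. }
    set (X := (1 + Cnorm z) ^ length p) in *.
    assert (1 <= (1 + Cnorm z) * X) by nra.
    assert (Cnorm a <= Cnorm a * ((1 + Cnorm z) * X)) by nra.
    nra.
Qed.


Definition Decay (g : Cx -> Cx) (al be : Cx) := forall N : nat, exists M, forall tau : R,
  (1 + Cnorm (ell al be tau)) ^ N * Cnorm (g (ell al be tau)) <= M.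

Lemma Cnorm_pos_ne z : z <> C0 -> 0 < Cnorm z.
Proof.
  intro H. destruct (Cnorm_ge0 z) as [|E]; auto. symmetry in E. apply Cnorm_eq0 in E. contradiction.
Qed.

Lemma schwartz_generic G H zeta al be lam :
  (forall s, Cderiv G s (H s)) ->
  (forall s, Cderiv H s (Cmul (Cadd (Cpown s 3) (Cmul zeta s)) (G s))) ->
  Decay G al be -> Decay H al be -> 0 < lam -> al <> C0 ->
  InSchwartz (fun x1 => G (Cadd (Cmul (RtoC (sqrt lam * x1)) al) be)).
Proof.
  intros HG HH DG DH Hlam Hal.
  set (c := Cmul (RtoC (sqrt lam)) al).
  assert (Ec : forall t, ell c be t = ell al be (sqrt lam * t)).
  { intro t. unfold ell, c. rewrite RtoC_mul. ring. }
  exists (Fseq G H zeta c be). split; [| split].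
  - intro t. rewrite Fseq_0, Ec. reflexivity.
  - intros m t. apply Fseq_deriv; auto.
  - intros k m.
    set (PQ := Nat.iter m (Dstep zeta c) (C1 :: nil, nil)).
    set (P := fst PQ); set (Q := snd PQ).
    destruct (DG (k + length P)%nat) as [MG HMG].
    destruct (DH (k + length Q)%nat) as [MH HMH].
    assert (Hc : 0 < Cnorm c).
    { unfold c. rewrite Cnorm_mul, Cnorm_RtoC. apply Rmult_lt_0_compat.
      rewrite Rabs_right; [apply sqrt_lt_R0; auto | apply Rle_ge, sqrt_pos].
      apply Cnorm_pos_ne; auto. }
    set (K0 := (1 + Cnorm be) / Cnorm c).
    exists (K0 ^ k * (psum P * MG + psum Q * MH)).
    intro t.
    unfold Fseq. fold PQ. unfold Phi. fold P Q.
    set (s := ell c be t).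
    assert (Hs : s = ell al be (sqrt lam * t)) by apply Ec.
    assert (Ht : Rabs t <= K0 * (1 + Cnorm s)).
    { unfold K0. assert (Es : Csub s be = Cmul (RtoC t) c) by (unfold s, ell; ring).
      assert (Rabs t * Cnorm c <= (1 + Cnorm be) * (1 + Cnorm s)).
      { rewrite <- Cnorm_RtoC, <- Cnorm_mul, <- Es. eapply Rle_trans. apply Cnorm_sub_tri.
        pose proof (Cnorm_ge0 s); pose proof (Cnorm_ge0 be). nra. }
      unfold Rdiv. apply Rmult_le_reg_r with (Cnorm c); auto.
      replace ((1 + Cnorm be) * / Cnorm c * (1 + Cnorm s) * Cnorm c) with
        ((1 + Cnorm be) * (1 + Cnorm s)) by (field; lra). lra. }
    assert (Htk : Rabs t ^ k <= K0 ^ k * (1 + Cnorm s) ^ k).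
    { rewrite <- Rpow_mult_distr. apply pow_incr. split; auto. apply Rabs_pos. }
    pose proof (Cpoly_bound P s) as BP. pose proof (Cpoly_bound Q s) as BQ.
    specialize (HMG (sqrt lam * t)). specialize (HMH (sqrt lam * t)).
    rewrite <- Hs in HMG, HMH. rewrite pow_add in HMG, HMH.
    pose proof (psum_ge0 P). pose proof (psum_ge0 Q).
    pose proof (Cnorm_ge0 s).
    assert (0 <= (1 + Cnorm s) ^ k) by (apply pow_le; lra).
    assert (0 <= (1 + Cnorm s) ^ length P) by (apply pow_le; lra).
    assert (0 <= (1 + Cnorm s) ^ length Q) by (apply pow_le; lra).
    assert (0 <= K0 ^ k) by (apply pow_le; unfold K0; apply Rle_mult_inv_pos; [pose proof (Cnorm_ge0 be); lra | auto]).
    pose proof (Cnorm_ge0 (G s)). pose proof (Cnorm_ge0 (H s)).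
    pose proof (Cnorm_ge0 (Cpoly P s)). pose proof (Cnorm_ge0 (Cpoly Q s)).
    assert (E1 : Cnorm (Cadd (Cmul (Cpoly P s) (G s)) (Cmul (Cpoly Q s) (H s))) <=
                 Cnorm (Cpoly P s) * Cnorm (G s) + Cnorm (Cpoly Q s) * Cnorm (H s)).
    { rewrite <- !Cnorm_mul. apply Cnorm_tri. }
    assert (E2 : (1 + Cnorm s) ^ k * (Cnorm (Cpoly P s) * Cnorm (G s)) <= psum P * MG).
    { apply Rle_trans with (psum P * ((1 + Cnorm s) ^ k * (1 + Cnorm s) ^ length P * Cnorm (G s))).
      - replace (psum P * ((1 + Cnorm s) ^ k * (1 + Cnorm s) ^ length P * Cnorm (G s))) with
          ((1 + Cnorm s) ^ k * ((psum P * (1 + Cnorm s) ^ length P) * Cnorm (G s))) by ring.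
        apply Rmult_le_compat_l; auto. apply Rmult_le_compat_r; auto.
      - apply Rmult_le_compat_l; auto. }
    assert (E3 : (1 + Cnorm s) ^ k * (Cnorm (Cpoly Q s) * Cnorm (H s)) <= psum Q * MH).
    { apply Rle_trans with (psum Q * ((1 + Cnorm s) ^ k * (1 + Cnorm s) ^ length Q * Cnorm (H s))).
      - replace (psum Q * ((1 + Cnorm s) ^ k * (1 + Cnorm s) ^ length Q * Cnorm (H s))) with
          ((1 + Cnorm s) ^ k * ((psum Q * (1 + Cnorm s) ^ length Q) * Cnorm (H s))) by ring.
        apply Rmult_le_compat_l; auto. apply Rmult_le_compat_r; auto.
      - apply Rmult_le_compat_l; auto. }
    set (A := Cnorm (Cadd (Cmul (Cpoly P s) (G s)) (Cmul (Cpoly Q s) (H s)))) in *.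
    assert (0 <= A) by apply Cnorm_ge0.
    apply Rle_trans with (K0 ^ k * (1 + Cnorm s) ^ k * A).
    + apply Rmult_le_compat_r; auto.
    + rewrite Rmult_assoc. apply Rmult_le_compat_l; auto. nra.
Qed.


Definition polar (r phi : R) : Cx := Cmul (RtoC r) (Cexp (0, phi)).

Lemma polar_eq r phi : polar r phi = (r * cos phi, r * sin phi).
Proof. unfold polar, Cmul, Cexp, RtoC; simpl. rewrite exp_0. f_equal; ring. Qed.

Lemma Cnorm_polar r phi : 0 <= r -> Cnorm (polar r phi) = r.
Proof. intro. unfold polar. rewrite Cnorm_mul, Cnorm_RtoC, Cnorm_Cexp_i, Rabs_right; lra. Qed.

Lemma Arg_polar r phi : 0 < r -> - (PI/2) < phi < PI/2 -> Arg (polar r phi) = phi.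
Proof.
  intros Hr Hphi. rewrite polar_eq. unfold Arg; simpl.
  assert (0 < cos phi) by (apply cos_gt_0; lra).
  destruct (Rlt_dec 0 (r * cos phi)) as [_|Hn]; [| exfalso; apply Hn; nra].
  replace (r * sin phi / (r * cos phi)) with (tan phi) by (unfold tan; field; lra).
  apply atan_tan; lra.
Qed.

Lemma polar_of_pos w : 0 < fst w -> w = polar (Cnorm w) (atan (snd w / fst w)).
Proof.
  destruct w as [a b]; simpl; intro Ha. rewrite polar_eq, cos_atan, sin_atan.
  assert (E : Cnorm (a, b) = a * sqrt (1 + (b / a)²)).
  { unfold Cnorm; simpl.
    assert (E0 : a*a+b*b = (a*a) * (1 + (b/a)²)) by (unfold Rsqr; field; lra).
    pose proof (Rle_0_sqr (b/a)).
    rewrite E0, sqrt_mult, sqrt_square; try lra; try nra. }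
  assert (0 < sqrt (1 + (b / a)²)) by (apply sqrt_lt_R0; pose proof (Rle_0_sqr (b/a)); lra).
  rewrite E. f_equal; field; lra.
Qed.

Lemma polar_mul r1 p1 r2 p2 : Cmul (polar r1 p1) (polar r2 p2) = polar (r1 * r2) (p1 + p2).
Proof. unfold polar. rewrite Cexp_i_add, RtoC_mul. ring. Qed.

Lemma Cexp_i_polar phi : Cexp (0, phi) = polar 1 phi.
Proof. unfold polar. rewrite RtoC_1. ring. Qed.

Lemma Cpow_real y p : 0 < Cnorm y ->
  Cpow y (RtoC p) = (Rpower (Cnorm y) p * cos (p * Arg y), Rpower (Cnorm y) p * sin (p * Arg y)).
Proof.
  intro H. unfold Cpow. destruct (Rlt_dec 0 (Cnorm y)); [| lra].
  unfold Cexp, Cmul, RtoC, Rpower; simpl. f_equal; f_equal; f_equal; ring.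
Qed.
Lemma Cnorm_Cpow y p : 0 < Cnorm y -> Cnorm (Cpow y (RtoC p)) = Rpower (Cnorm y) p.
Proof.
  intro H. rewrite Cpow_real by auto.
  replace (Rpower (Cnorm y) p * cos (p * Arg y), Rpower (Cnorm y) p * sin (p * Arg y))
    with (polar (Rpower (Cnorm y) p) (p * Arg y)) by (rewrite polar_eq; auto).
  apply Cnorm_polar. unfold Rpower. left; apply exp_pos.
Qed.

Lemma exp_pow_nat x n : exp (INR n * x) = exp x ^ n.
Proof.
  induction n. simpl. rewrite Rmult_0_l. apply exp_0.
  rewrite S_INR, Rmult_plus_distr_r, Rmult_1_l, exp_plus, IHn. simpl. ring.
Qed.

Lemma poly_exp u N : 0 <= u -> (1 + u) ^ N <= (INR N + 1) ^ N * exp u.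
Proof.
  intro Hu. pose proof (pos_INR N).
  set (e := exp (u / (INR N + 1))).
  assert (He1 : (1 + u) / (INR N + 1) <= e).
  { unfold e. eapply Rle_trans; [| apply exp_ineq1_le].
    unfold Rdiv. rewrite Rmult_plus_distr_r. apply Rplus_le_compat_r.
    rewrite Rmult_1_l. apply Rle_trans with 1;[|lra].
    rewrite <- Rinv_1 at 2. apply Rinv_le_contravar; lra. }
  assert (He : 1 <= e).
  { unfold e. eapply Rle_trans; [| apply exp_ineq1_le].
    assert (0 <= u / (INR N + 1)) by (apply Rle_mult_inv_pos; lra). lra. }
  assert (Hu1 : (1 + u) ^ N = ((1 + u) / (INR N + 1)) ^ N * (INR N + 1) ^ N).
  { rewrite <- Rpow_mult_distr. f_equal. field. lra. }
  rewrite Hu1.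
  assert (0 <= (1 + u) / (INR N + 1)) by (apply Rle_mult_inv_pos; lra).
  assert (0 < (INR N + 1) ^ N) by (apply pow_lt; lra).
  assert (((1 + u) / (INR N + 1)) ^ N <= e ^ N) by (apply pow_incr; lra).
  assert (e ^ N <= exp u).
  { replace (exp u) with (exp (INR (S N) * (u / (INR N + 1)))) by (f_equal; rewrite S_INR; field; lra).
    rewrite exp_pow_nat. fold e. simpl.
    assert (0 <= e ^ N) by (apply pow_le; lra). nra. }
  nra.
Qed.

Lemma Cnorm_Efac y z : Cnorm (Efac y z) =
  exp (2/5 * fst (Cpow y (RtoC (5/2))) + fst (Cmul z (Cpow y (RtoC (1/2))))).
Proof.
  unfold Efac. rewrite Cnorm_Cexp. f_equal. unfold Cadd, Cmul, RtoC; simpl. ring.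
Qed.

Lemma ReE_lower y z r kap : 1 <= Cnorm y -> Cnorm z <= r -> kap <= cos (5/2 * Arg y) -> 0 < kap ->
  2/5 * kap * Cnorm y ^ 2 - r * Cnorm y <=
  2/5 * fst (Cpow y (RtoC (5/2))) + fst (Cmul z (Cpow y (RtoC (1/2)))).
Proof.
  intros Hu Hz Hk Hk0. set (u := Cnorm y) in *.
  assert (Hu0 : 0 < u) by lra.
  rewrite (Cpow_real y (5/2)) by auto. cbn [fst].
  assert (R1 : u ^ 2 <= Rpower u (5/2)).
  { rewrite <- Rpower_pow by auto. apply Rle_Rpower; auto. simpl; lra. }
  assert (R2 : Rpower u (1/2) <= u).
  { rewrite <- (Rpower_1 u) at 2 by auto. apply Rle_Rpower; lra. }
  assert (R3 : - (r * u) <= fst (Cmul z (Cpow y (RtoC (1/2))))).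
  { pose proof (Cnorm_fst (Cmul z (Cpow y (RtoC (1/2))))).
    rewrite Cnorm_mul, Cnorm_Cpow in H by auto. fold u in H.
    pose proof (Cnorm_ge0 z). assert (0 <= r) by lra.
    assert (Cnorm z * Rpower u (1/2) <= r * u).
    { apply Rmult_le_compat; try lra; try (unfold Rpower; left; apply exp_pos). }
    pose proof (Rle_abs (- fst (Cmul z (Cpow y (RtoC (1 / 2)))))) as Hab. rewrite Rabs_Ropp in Hab. lra. }
  assert (0 <= Rpower u (5/2)) by (unfold Rpower; left; apply exp_pos).
  assert (kap * u ^ 2 <= Rpower u (5/2) * cos (5/2 * Arg y)).
  { apply Rle_trans with (kap * Rpower u (5/2)). apply Rmult_le_compat_l; lra.
    rewrite Rmult_comm. apply Rmult_le_compat_l; lra. }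
  fold u. lra.
Qed.

Lemma Rpower_pos x y : 0 < Rpower x y.
Proof. unfold Rpower; apply exp_pos. Qed.

Lemma exp_le x y : x <= y -> exp x <= exp y.
Proof. intros [H|H]. left; apply exp_increasing; auto. subst; lra. Qed.

Lemma far_bound g p s Cf delta r kap N :
  asympt g p s Cf -> 0 < delta -> Rabs p <= 1 -> 0 < kap ->
  exists M y1, forall y z, in_subsector delta y -> y1 <= Cnorm y -> Cnorm z <= r ->
    kap <= cos (5/2 * Arg y) -> (1 + Cnorm y) ^ N * Cnorm (g y z) <= M.
Proof.
  intros Has Hd Hp Hk.
  destruct (Has delta r Hd 0%nat) as [K [y0 HK]].
  set (a := 2/5 * kap).
  set (r' := Rmax r 0).
  set (C := (r' + 2)^2 / (4 * a)).
  set (Sb := Cnorm s + Rabs K).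
  exists ((INR (S N) + 1) ^ (S N) * Sb * exp C), (Rmax y0 1).
  intros y z Hsub Hy Hz Hc.
  specialize (HK y z Hsub ltac:(pose proof (Rmax_l y0 1); lra) Hz).
  set (u := Cnorm y) in *.
  assert (Hu1 : 1 <= u) by (pose proof (Rmax_r y0 1); lra).
  assert (Hu0 : 0 < u) by lra.
  simpl Csum1 in HK. simpl INR in HK.
  assert (HR : K * Rpower u (- (0 + 1) / 2) <= Rabs K).
  { assert (Rpower u (- (0 + 1) / 2) <= 1).
    { apply Rle_trans with (Rpower u 0); [apply Rle_Rpower; lra | rewrite Rpower_O; lra]. }
    pose proof (Rpower_pos u (- (0 + 1) / 2)).
    destruct (Rle_dec 0 K). rewrite Rabs_right by lra. nra.
    pose proof (Rabs_pos K). nra. }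
  set (gn := Cnorm (g y z)).
  set (E := 2/5 * fst (Cpow y (RtoC (5/2))) + fst (Cmul z (Cpow y (RtoC (1/2))))).
  assert (HA : gn * Rpower u (- p) * exp E <= Sb).
  { unfold gn, E, Sb, u. rewrite <- Cnorm_Efac, <- (Cnorm_Cpow y (-p)) by auto.
    rewrite <- !Cnorm_mul.
    pose proof (Cnorm_rev_tri (Cmul (Cmul (g y z) (Cpow y (RtoC (- p)))) (Efac y z)) (Copp (Cadd s C0))) as H.
    rewrite Cnorm_opp in H.
    replace (Cadd s C0) with s in * by ring.
    replace (- - p) with p in HK by ring. unfold Csub in HK. lra. }
  assert (HP : / u <= Rpower u (- p)).
  { replace (/ u) with (Rpower u (Ropp 1)) by (rewrite Rpower_Ropp, Rpower_1; auto). apply Rle_Rpower; auto.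
    pose proof (Rle_abs p). pose proof (Rle_abs (-p)).
    rewrite Rabs_Ropp in *. lra. }
  assert (HE : 2 * u - C <= E).
  { eapply Rle_trans; [| apply ReE_lower with (kap := kap) (r := r'); auto].
    - unfold C. fold a.
      assert (0 < a) by (unfold a; lra).
      assert (0 <= a * u ^ 2 - (r' + 2) * u + (r' + 2) ^ 2 / (4 * a)).
      { replace (a * u ^ 2 - (r' + 2) * u + (r' + 2) ^ 2 / (4 * a)) with
          (a * (u - (r' + 2) / (2 * a)) ^ 2) by (field; lra).
        apply Rmult_le_pos; [lra | apply pow2_ge_0]. }
      fold u. unfold a in *. lra.
    - unfold r'. pose proof (Rmax_l r 0); lra. }
  assert (Hgn : 0 <= gn) by apply Cnorm_ge0.
  assert (Hg1 : gn <= Sb * u * exp (C - 2 * u)).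
  { assert (Hx : exp (2 * u - C) <= exp E) by (apply exp_le; auto).
    assert (H1 : gn * / u * exp (2 * u - C) <= Sb).
    { eapply Rle_trans; [| exact HA]. apply Rmult_le_compat; auto.
      - apply Rmult_le_pos; auto. left; apply Rinv_0_lt_compat; auto.
      - left; apply exp_pos.
      - apply Rmult_le_compat_l; auto. }
    assert (E1 : exp (2 * u - C) * exp (C - 2 * u) = 1).
    { rewrite <- exp_plus. replace (2 * u - C + (C - 2 * u)) with 0 by ring. apply exp_0. }
    pose proof (exp_pos (C - 2 * u)).
    assert (Eg : gn = gn * / u * exp (2 * u - C) * (u * exp (C - 2 * u))).
    { transitivity (gn * (exp (2*u-C) * exp (C-2*u))). rewrite E1; ring. field; lra. }
    rewrite Eg at 1.
    replace (Sb * u * exp (C - 2 * u)) with (Sb * (u * exp (C - 2 * u))) by ring.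
    apply Rmult_le_compat_r; auto. nra. }
  pose proof (poly_exp u (S N) ltac:(lra)) as PE.
  simpl pow in PE. 
  assert (0 <= (1 + u) ^ N) by (apply pow_le; lra).
  assert (Hc1 : exp (C - 2 * u) * exp u <= exp C).
  { rewrite <- exp_plus. apply exp_le. lra. }
  assert (0 <= Sb) by (unfold Sb; pose proof (Cnorm_ge0 s); pose proof (Rabs_pos K); lra).
  apply Rle_trans with ((1 + u) ^ N * (Sb * u * exp (C - 2 * u))).
  - apply Rmult_le_compat_l; auto.
  - apply Rle_trans with (((1 + u) * (1 + u) ^ N) * Sb * exp (C - 2 * u)).
    + pose proof (exp_pos (C - 2 * u)). nra.
    + apply Rle_trans with (((INR (S N) + 1) ^ S N * exp u) * Sb * exp (C - 2 * u)).
      * pose proof (exp_pos (C - 2 * u)). apply Rmult_le_compat_r; [lra|]. apply Rmult_le_compat_r; auto.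
      * replace ((INR (S N) + 1) ^ S N * exp u * Sb * exp (C - 2 * u)) with
          ((INR (S N) + 1) ^ S N * Sb * (exp (C - 2 * u) * exp u)) by ring.
        apply Rmult_le_compat_l; auto. apply Rmult_le_pos; auto. apply pow_le. pose proof (pos_INR (S N)); lra.
Qed.


Lemma atan_le x y : x <= y -> atan x <= atan y.
Proof. intros [H|H]. left; apply atan_increasing; auto. subst; lra. Qed.

Lemma Cnorm_pair_pos a b : 0 < a -> 0 < Cnorm (a, b).
Proof. intro. pose proof (Cnorm_fst (a,b)). simpl in H0. rewrite Rabs_right in H0; lra. Qed.

Section Geom.
Variables (th a b : R).
Hypothesis Hth : 0 < th <= PI / 6.
Hypothesis Ha : 0 < a.
Hypothesis Hb : 0 < b.
Let al := Cmul (RtoC a) (Cexp (0, - (th / 5))).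
Let be := Cmul (RtoC b) (Cexp (0, 4 * th / 5)).

Lemma PIpos : 0 < PI. Proof. apply PI_RGT_0. Qed.

Lemma sin_th : 0 < sin th.
Proof. pose proof PIpos. apply sin_gt_0; lra. Qed.
Lemma cos_th : 0 < cos th.
Proof. pose proof PIpos. apply cos_gt_0; lra. Qed.

Lemma ell_decomp tau :
  ell al be tau = Cmul (polar 1 (- (th / 5))) (Cadd (RtoC (tau * a)) (polar b th)).
Proof.
  unfold ell, al, be, polar.
  replace (4 * th / 5) with (- (th/5) + th) by field. rewrite Cexp_i_add, RtoC_mul, RtoC_1. ring.
Qed.

Lemma right_geom tau : 0 <= tau ->
  exists r psi, 0 < r /\ - (th / 5) <= psi <= 4 * th / 5 /\ ell al be tau = polar r psi.
Proof.
  intro Ht. pose proof sin_th. pose proof cos_th. pose proof PIpos.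
  set (w := (tau * a + b * cos th, b * sin th)).
  assert (Ew : Cadd (RtoC (tau * a)) (polar b th) = w).
  { rewrite polar_eq. unfold w, Cadd, RtoC; simpl. f_equal; ring. }
  assert (Hw1 : 0 < fst w) by (unfold w; simpl; nra).
  pose proof (polar_of_pos w Hw1) as Pw.
  set (psi0 := atan (snd w / fst w)) in *.
  exists (1 * Cnorm w), (- (th / 5) + psi0). split; [|split].
  - rewrite Rmult_1_l. destruct w as [w1 w2]. apply Cnorm_pair_pos. auto.
  - assert (0 <= psi0 <= th).
    { unfold psi0, w; simpl. split.
      - rewrite <- atan_0. apply atan_le. apply Rle_mult_inv_pos; nra.
      - apply Rle_trans with (atan (tan th)); [| rewrite atan_tan; lra]. apply atan_le. unfold tan.
        assert (0 <= tau * a) by nra. assert (0 < b * cos th) by nra.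
        unfold Rdiv. apply Rmult_le_reg_r with (cos th * (tau * a + b * cos th)). apply Rmult_lt_0_compat; lra.
        assert (0 <= sin th * tau * a) by (rewrite Rmult_assoc; apply Rmult_le_pos; nra).
        field_simplify; lra. }
    lra.
  - rewrite ell_decomp, Ew, Pw at 1. rewrite polar_mul. reflexivity.
Qed.

Lemma left_geom sig : 2 * b * cos th <= sig * a ->
  exists r psi, 0 < r /\ (PI - 6 * th) / 5 <= psi <= (PI - th) / 5 /\
    Cmul (Cpown Cinvomega 2) (ell al be (- sig)) = polar r psi.
Proof.
  intro Hs. pose proof sin_th. pose proof cos_th. pose proof PIpos.
  set (w := (sig * a - b * cos th, - (b * sin th))).
  assert (Ew : Cadd (RtoC (- sig * a)) (polar b th) = Cmul (polar 1 PI) w).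
  { rewrite !polar_eq, cos_PI, sin_PI. unfold w, Cadd, Cmul, RtoC; simpl. f_equal; ring. }
  assert (Hw1 : 0 < fst w) by (unfold w; simpl; nra).
  pose proof (polar_of_pos w Hw1) as Pw.
  set (psi0 := atan (snd w / fst w)) in *.
  assert (Eq : Cpown Cinvomega 2 = polar 1 (- (2 * PI / 5) + - (2 * PI / 5))).
  { unfold Cinvomega, polar. rewrite RtoC_1, Cexp_i_add. simpl. ring. }
  exists (1 * 1 * 1 * Cnorm w), (- (2 * PI / 5) + - (2 * PI / 5) + - (th / 5) + PI + psi0).
  split; [|split].
  - rewrite !Rmult_1_l. destruct w as [w1 w2]. apply Cnorm_pair_pos. auto.
  - assert (- th <= psi0 <= 0).
    { unfold psi0, w; simpl. split.
      - apply Rle_trans with (atan (tan (- th))); [rewrite atan_tan; lra |]. apply atan_le. unfold tan.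
        rewrite sin_neg, cos_neg.
        assert (0 < b * cos th) by nra.
        assert (0 <= sin th * (sig * a - 2 * b * cos th)) by (apply Rmult_le_pos; lra).
        unfold Rdiv. apply Rmult_le_reg_r with (cos th * (sig * a - b * cos th)). apply Rmult_lt_0_compat; lra.
        field_simplify; try lra.
      - rewrite <- atan_0. apply atan_le. 
        assert (0 <= b * sin th / (sig * a - b * cos th)) by (apply Rle_mult_inv_pos; nra).
        unfold Rdiv in *. nra. }
    lra.
  - rewrite Eq, ell_decomp.
    replace (Cadd (RtoC (- sig * a)) (polar b th)) with (Cmul (polar 1 PI) w) by (rewrite <- Ew; reflexivity).
    rewrite Pw at 1. rewrite !polar_mul. f_equal; ring.
Qed.

Definition kap := sin (th / 2).
Lemma kap_pos : 0 < kap.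
Proof. pose proof PIpos. unfold kap. apply sin_gt_0; lra. Qed.
Lemma kap_le : kap <= 1/2.
Proof. pose proof PIpos. unfold kap. rewrite <- sin_PI6. apply sin_incr_1; lra. Qed.

Lemma cos_abs x : cos (Rabs x) = cos x.
Proof. unfold Rabs; destruct (Rcase_abs x). apply cos_neg. auto. Qed.

Lemma right_cos psi : - (th / 5) <= psi <= 4 * th / 5 -> kap <= cos (5/2 * psi).
Proof.
  intro H. pose proof PIpos. pose proof kap_le.
  rewrite <- cos_abs. apply Rle_trans with (cos (PI / 3)). rewrite cos_PI3; lra.
  apply cos_decr_1; try lra. apply Rabs_pos. unfold Rabs; destruct (Rcase_abs (5/2*psi)); lra.
  unfold Rabs; destruct (Rcase_abs (5/2*psi)); lra.
Qed.

Lemma left_cos psi : (PI - 6 * th) / 5 <= psi <= (PI - th) / 5 -> kap <= cos (5/2 * psi).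
Proof.
  intro H. pose proof PIpos. unfold kap. rewrite <- cos_shift.
  apply cos_decr_1; lra.
Qed.

Lemma subsector_polar r psi : 0 < r -> - (PI / 2) < psi < PI / 2 -> Rabs psi <= 2 * PI / 5 ->
  in_subsector (PI / 5) (polar r psi) /\ Arg (polar r psi) = psi.
Proof.
  intros Hr Hp Hab. rewrite Arg_polar by auto. split; auto. split.
  - intro E. pose proof (Cnorm_polar r psi). rewrite E, Cnorm_C0 in H. lra.
  - rewrite Arg_polar by auto. lra.
Qed.
End Geom.


Lemma Cderiv_ext f g y L : (forall w, f w = g w) -> Cderiv f y L -> Cderiv g y L.
Proof.
  intros E H eps He. destruct (H eps He) as [d [Hd Hh]]. exists d; split; auto.
  intros h Hh'. rewrite <- !E. auto.
Qed.

Lemma Cderiv_scale k f y L : Cderiv f y L -> Cderiv (fun w => Cmul k (f w)) y (Cmul k L).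
Proof.
  intro H. destruct (Req_dec (Cnorm k) 0) as [Hk|Hk].
  - apply Cnorm_eq0 in Hk; subst k. intros eps He. exists 1; split; [lra|].
    intros h _. replace (Csub (Csub (Cmul C0 (f (Cadd y h))) (Cmul C0 (f y))) (Cmul (Cmul C0 L) h)) with C0 by ring.
    rewrite Cnorm_C0. pose proof (Cnorm_ge0 h). nra.
  - pose proof (Cnorm_ge0 k). intros eps He.
    destruct (H (eps / Cnorm k)) as [d [Hd Hh]]. apply Rdiv_lt_0_compat; lra.
    exists d; split; auto. intros h Hh'. specialize (Hh h Hh').
    replace (Csub (Csub (Cmul k (f (Cadd y h))) (Cmul k (f y))) (Cmul (Cmul k L) h))
      with (Cmul k (Csub (Csub (f (Cadd y h)) (f y)) (Cmul L h))) by ring.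
    rewrite Cnorm_mul.
    apply Rle_trans with (Cnorm k * (eps / Cnorm k * Cnorm h)). apply Rmult_le_compat_l; auto.
    right. field. lra.
Qed.

Lemma Cderiv_lin g q y L : q <> C0 -> Cderiv g (Cmul q y) L ->
  Cderiv (fun w => g (Cmul q w)) y (Cmul q L).
Proof.
  intros Hq H. pose proof (Cnorm_pos_ne q Hq) as Hqp. intros eps He.
  destruct (H (eps / Cnorm q)) as [d [Hd Hh]]. apply Rdiv_lt_0_compat; lra.
  exists (d / Cnorm q). split. apply Rdiv_lt_0_compat; lra.
  intros h [Hh0 Hh1]. specialize (Hh (Cmul q h)). rewrite Cnorm_mul in Hh.
  replace (Cmul q (Cadd y h)) with (Cadd (Cmul q y) (Cmul q h)) by ring.
  replace (Cmul (Cmul q L) h) with (Cmul L (Cmul q h)) by ring.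
  eapply Rle_trans. apply Hh. split. apply Rmult_lt_0_compat; lra.
  apply Rmult_lt_reg_r with (/ Cnorm q). apply Rinv_0_lt_compat; lra.
  rewrite Rmult_comm, <- Rmult_assoc, Rinv_l by lra. unfold Rdiv in Hh1. lra.
  right. field. lra.
Qed.

Lemma Cderiv_unique f y L1 L2 : Cderiv f y L1 -> Cderiv f y L2 -> L1 = L2.
Proof.
  intros H1 H2.
  assert (forall eps, 0 < eps -> Cnorm (Csub L1 L2) <= 2 * eps).
  { intros eps He. destruct (H1 eps He) as [d1 [Hd1 P1]]. destruct (H2 eps He) as [d2 [Hd2 P2]].
    set (h := RtoC (Rmin d1 d2 / 2)).
    assert (Hm : 0 < Rmin d1 d2) by (apply Rmin_pos; auto).
    assert (Hh : Cnorm h = Rmin d1 d2 / 2) by (unfold h; rewrite Cnorm_RtoC, Rabs_right; lra).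
    assert (Hh1 : 0 < Cnorm h < d1) by (pose proof (Rmin_l d1 d2); lra).
    assert (Hh2 : 0 < Cnorm h < d2) by (pose proof (Rmin_r d1 d2); lra).
    specialize (P1 h Hh1). specialize (P2 h Hh2).
    assert (E : Cmul (Csub L1 L2) h = Cadd (Csub (Csub (f (Cadd y h)) (f y)) (Cmul L2 h))
                                            (Copp (Csub (Csub (f (Cadd y h)) (f y)) (Cmul L1 h)))) by ring.
    pose proof (Cnorm_tri (Csub (Csub (f (Cadd y h)) (f y)) (Cmul L2 h))
                          (Copp (Csub (Csub (f (Cadd y h)) (f y)) (Cmul L1 h)))) as T.
    rewrite <- E, Cnorm_mul, Cnorm_opp in T.
    apply Rmult_le_reg_r with (Cnorm h). lra. lra. }
  destruct (Req_dec (Cnorm (Csub L1 L2)) 0) as [E|E].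
  - apply Cnorm_eq0 in E. replace L1 with (Cadd (Csub L1 L2) L2) by ring. rewrite E. ring.
  - pose proof (Cnorm_ge0 (Csub L1 L2)).
    specialize (H (Cnorm (Csub L1 L2) / 4) ltac:(lra)). lra.
Qed.

Lemma RC_cont f t : (exists L, RCderiv f t L) -> continuity_pt (fun s => Cnorm (f s)) t.
Proof.
  intros [L H]. rewrite RC_comp in H. destruct H as [H1 H2].
  assert (C1' : continuity_pt (fun s => fst (f s)) t)
    by (apply derivable_continuous_pt; exists (fst L); auto).
  assert (C2' : continuity_pt (fun s => snd (f s)) t)
    by (apply derivable_continuous_pt; exists (snd L); auto).
  assert (C3 : continuity_pt (fun s => fst (f s) * fst (f s) + snd (f s) * snd (f s)) t).
  { apply continuity_pt_plus; apply continuity_pt_mult; auto. }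
  unfold Cnorm.
  apply (continuity_pt_comp (fun s => fst (f s) * fst (f s) + snd (f s) * snd (f s)) sqrt t C3).
  apply continuity_pt_sqrt. nra.
Qed.

Lemma line_cont g c d N t : (forall s, exists L, Cderiv g s L) ->
  continuity_pt (fun tau => (1 + Cnorm (ell c d tau)) ^ N * Cnorm (g (ell c d tau))) t.
Proof.
  intro Hg. apply continuity_pt_mult.
  - apply (continuity_pt_comp (fun tau => 1 + Cnorm (ell c d tau)) (fun x => x ^ N)).
    + apply continuity_pt_plus. apply continuity_pt_const. intros x y; auto.
      apply RC_cont. exists c. apply RC_ell.
    + apply derivable_continuous_pt. apply derivable_pt_pow.
  - apply RC_cont. destruct (Hg (ell c d t)) as [L HL]. exists (Cmul c L).
    apply RC_chain. exact HL.
Qed.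


Lemma Cnorm_ell_lower th a b tau : 0 < a -> 0 < b ->
  Rabs tau * a - b <= Cnorm (ell (Cmul (RtoC a) (Cexp (0, - (th / 5)))) (Cmul (RtoC b) (Cexp (0, 4 * th / 5))) tau).
Proof.
  intros Ha Hb. unfold ell.
  pose proof (Cnorm_rev_tri (Cmul (RtoC tau) (Cmul (RtoC a) (Cexp (0, - (th / 5)))))
                            (Cmul (RtoC b) (Cexp (0, 4 * th / 5)))).
  rewrite !Cnorm_mul, !Cnorm_RtoC, !Cnorm_Cexp_i, (Rabs_right a), (Rabs_right b) in H by lra. lra.
Qed.

Lemma decay_assemble th a b g :
  0 < th <= PI / 6 -> 0 < a -> 0 < b ->
  (forall s, exists L, Cderiv g s L) ->
  (forall N, exists M y1, forall y, in_subsector (PI/5) y -> y1 <= Cnorm y ->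
     kap th <= cos (5/2 * Arg y) -> (1 + Cnorm y) ^ N * Cnorm (g y) <= M) ->
  (forall N, exists M y1, forall y, in_subsector (PI/5) (Cmul (Cpown Cinvomega 2) y) -> y1 <= Cnorm y ->
     kap th <= cos (5/2 * Arg (Cmul (Cpown Cinvomega 2) y)) -> (1 + Cnorm y) ^ N * Cnorm (g y) <= M) ->
  Decay g (Cmul (RtoC a) (Cexp (0, - (th / 5)))) (Cmul (RtoC b) (Cexp (0, 4 * th / 5))).
Proof.
  intros Hth Ha Hb Hg HR HL N.
  pose proof PIpos.
  destruct (HR N) as [M1 [y1 H1]]. destruct (HL N) as [M2 [y2 H2]].
  set (al := Cmul (RtoC a) (Cexp (0, - (th / 5)))) in *.
  set (be := Cmul (RtoC b) (Cexp (0, 4 * th / 5))) in *.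
  set (T := Rmax (Rmax ((y1 + b) / a) ((y2 + b) / a)) (2 * b / a)).
  assert (HT0 : 2 * b / a <= T) by apply Rmax_r.
  assert (HT1 : (y1 + b) / a <= T) by (eapply Rle_trans; [apply Rmax_l | apply Rmax_l]).
  assert (HT2 : (y2 + b) / a <= T) by (eapply Rle_trans; [apply Rmax_r | apply Rmax_l]).
  assert (0 < 2 * b / a) by (apply Rdiv_lt_0_compat; lra).
  set (f := fun tau => (1 + Cnorm (ell al be tau)) ^ N * Cnorm (g (ell al be tau))).
  destruct (continuity_ab_maj f (- T) T ltac:(lra) (fun c _ => line_cont g al be N c Hg)) as [tm [Htm _]].
  exists (Rmax (Rmax M1 M2) (f tm)). intro tau. fold (f tau).
  assert (Hlow := Cnorm_ell_lower th a b tau Ha Hb). fold al be in Hlow.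
  destruct (Rle_dec T tau) as [Hr | Hr]; [| destruct (Rle_dec tau (- T)) as [Hl | Hl]].
  -
    apply Rle_trans with M1; [| eapply Rle_trans; apply Rmax_l].
    destruct (right_geom th a b Hth Ha Hb tau ltac:(lra)) as [r [psi [Hr0 [Hpsi E]]]].
    fold al be in E. unfold f. rewrite E in *.
    destruct (subsector_polar r psi Hr0 ltac:(lra) ltac:(unfold Rabs; destruct (Rcase_abs psi); lra)) as [Hs HA].
    apply H1; auto.
    + rewrite Rabs_right in Hlow by lra.
      assert (y1 + b <= tau * a).
      { apply Rle_trans with (T * a). apply Rle_trans with ((y1 + b) / a * a).
        right; field; lra. apply Rmult_le_compat_r; lra. apply Rmult_le_compat_r; lra. }
      lra.
    + rewrite HA. eapply right_cos; eauto.
  -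
    apply Rle_trans with M2; [| eapply Rle_trans; [apply Rmax_r | apply Rmax_l]].
    assert (Hs2 : 2 * b * cos th <= (- tau) * a).
    { pose proof (COS_bound th) as [_ Hc].
      apply Rle_trans with (2 * b). nra.
      apply Rle_trans with (T * a). apply Rle_trans with (2 * b / a * a).
      right; field; lra. apply Rmult_le_compat_r; lra. apply Rmult_le_compat_r; lra. }
    destruct (left_geom th a b Hth Hb (- tau) Hs2) as [r [psi [Hr0 [Hpsi E]]]].
    rewrite Ropp_involutive in E. fold al be in E.
    destruct (subsector_polar r psi Hr0 ltac:(lra) ltac:(unfold Rabs; destruct (Rcase_abs psi); lra)) as [Hs HA].
    unfold f. apply H2.
    + rewrite E; auto.
    + rewrite Rabs_left1 in Hlow by lra.
      assert (y2 + b <= - tau * a).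
      { apply Rle_trans with (T * a). apply Rle_trans with ((y2 + b) / a * a).
        right; field; lra. apply Rmult_le_compat_r; lra. apply Rmult_le_compat_r; lra. }
      lra.
    + rewrite E, HA. eapply left_cos; eauto.
  - apply Rle_trans with (f tm). apply Htm. lra. apply Rmax_r.
Qed.


Lemma HasD_ext j f f' g g' : (forall x, f x = f' x) -> (forall x, g x = g' x) ->
  HasD j f g -> HasD j f' g'.
Proof.
  intros Ef Eg [h [Hh Hg]]. exists h. split.
  - intro x. eapply RC_ext; [| apply (Hh x)]. intro s. apply Ef.
  - intro x. rewrite <- Eg. apply Hg.
Qed.

Lemma Ci_sq : Cmul (Copp Ci) Ci = C1.
Proof. unfold Cmul, Copp, Ci, C1; simpl; f_equal; ring. Qed.

Section PDE.
Variables (s RR th lam : R) (n : nat).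
Hypothesis Hn : (2 <= n)%nat.

Definition Ef (x : nat -> R) : Cx :=
  Cexp (Cadd (Cmul Ci (Cmul (RtoC (x 0%nat * s * RR)) (Cexp (0, th)))) (Cmul Ci (RtoC (x n * lam)))).
Definition mu : Cx := Cmul (RtoC (s * RR)) (Cexp (0, th)).
Definition W (k : Cx) (g : R -> Cx) (x : nat -> R) : Cx := Cmul k (Cmul (Ef x) (g (x 1%nat))).

Lemma eqb_n0 : Nat.eqb n 0 = false.
Proof. apply Nat.eqb_neq. lia. Qed.
Lemma eqb_n1 : Nat.eqb n 1 = false.
Proof. apply Nat.eqb_neq. lia. Qed.
Lemma eqb_0n : Nat.eqb 0 n = false.
Proof. apply Nat.eqb_neq. lia. Qed.
Lemma eqb_1n : Nat.eqb 1 n = false.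
Proof. apply Nat.eqb_neq. lia. Qed.

Lemma D0 k g : HasD 0 (W k g) (W (Cmul k mu) g).
Proof.
  exists (W (Cmul k (Cmul Ci mu)) g). split.
  - intro x.
    set (d := Cmul Ci (RtoC (x n * lam))).
    pose proof (RC_scale k _ (x 0%nat) _ (RC_mul _ _ (x 0%nat) _ _
        (RC_cexp (Cmul Ci mu) d (x 0%nat)) (RC_const (g (x 1%nat)) (x 0%nat)))) as H.
    eapply RC_ext; [| eapply RC_ext_L; [| exact H]].
    + intro t. unfold W, Ef, upd. simpl. rewrite eqb_n0. unfold d, mu.
      f_equal. f_equal. f_equal. f_equal. rewrite !RtoC_mul. ring.
    + assert (EE : Ef x = Cexp (Cadd (Cmul (RtoC (x 0%nat)) (Cmul Ci mu)) d))
        by (unfold Ef, d, mu; f_equal; rewrite !RtoC_mul; ring).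
      unfold W. rewrite EE. ring.
  - intro x. unfold W. replace (Cmul (Cmul k mu) (Cmul (Ef x) (g (x 1%nat)))) with
      (Cmul (Cmul (Copp Ci) Ci) (Cmul (Cmul k mu) (Cmul (Ef x) (g (x 1%nat))))) by (rewrite Ci_sq; ring).
    ring.
Qed.

Lemma Dn k g : HasD n (W k g) (W (Cmul k (RtoC lam)) g).
Proof.
  exists (W (Cmul k (Cmul Ci (RtoC lam))) g). split.
  - intro x.
    set (d := Cmul Ci (Cmul (RtoC (x 0%nat * s * RR)) (Cexp (0, th)))).
    pose proof (RC_scale k _ (x n) _ (RC_mul _ _ (x n) _ _
        (RC_cexp (Cmul Ci (RtoC lam)) d (x n)) (RC_const (g (x 1%nat)) (x n)))) as H.
    eapply RC_ext; [| eapply RC_ext_L; [| exact H]].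
    + intro t. unfold W, Ef, upd. rewrite eqb_1n, eqb_0n, Nat.eqb_refl. unfold d.
      f_equal. f_equal. f_equal. rewrite !RtoC_mul. ring.
    + assert (EE : Ef x = Cexp (Cadd (Cmul (RtoC (x n)) (Cmul Ci (RtoC lam))) d))
        by (unfold Ef, d; f_equal; rewrite !RtoC_mul; ring).
      unfold W. rewrite EE. ring.
  - intro x. unfold W. replace (Cmul (Cmul k (RtoC lam)) (Cmul (Ef x) (g (x 1%nat)))) with
      (Cmul (Cmul (Copp Ci) Ci) (Cmul (Cmul k (RtoC lam)) (Cmul (Ef x) (g (x 1%nat))))) by (rewrite Ci_sq; ring).
    ring.
Qed.

Lemma D1 k g g' : (forall t, RCderiv g t (g' t)) -> HasD 1 (W k g) (W (Cmul k (Copp Ci)) g').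
Proof.
  intro Hg. exists (W k g'). split.
  - intro x.
    pose proof (RC_scale (Cmul k (Ef x)) _ (x 1%nat) _ (Hg (x 1%nat))) as H.
    eapply RC_ext; [| eapply RC_ext_L; [| exact H]].
    + intro t. unfold W, Ef, upd. simpl. rewrite eqb_n1. ring.
    + unfold W. ring.
  - intro x. unfold W. ring.
Qed.
End PDE.

Lemma C3 : RtoC 3 = Cadd C1 (Cadd C1 C1).
Proof. unfold RtoC, Cadd, C1; simpl; f_equal; ring. Qed.
Lemma C2 : RtoC 2 = Cadd C1 C1.
Proof. unfold RtoC, Cadd, C1; simpl; f_equal; ring. Qed.

Lemma pde_alg (m c be z L B X E Yv : Cx) :
  Csub (Cmul m (Cmul c (Cmul c (Cmul c (Cmul c c))))) (Cmul B (Cmul L (Cmul L L))) = C0 ->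
  Csub (Cmul (RtoC 3) (Cmul (Cmul c (Cmul c (Cmul c c))) be)) (Cmul L L) = C0 ->
  Cadd z (Cmul (RtoC 3) (Cmul be be)) = C0 ->
  Csub (Cmul m m) (Cmul (RtoC 2) (Cmul (Cmul c c) (Cmul be (Cmul be be)))) = C0 ->
  Csub (Csub (Cmul (Cmul (Cmul m m) m) (Cmul E Yv))
             (Cadd (Cmul (Cmul (Cmul m (Copp Ci)) (Copp Ci))
                         (Cmul E (Cmul c (Cmul c (Cmul (Cadd (Cpown (Cadd (Cmul X c) be) 3)
                                                             (Cmul z (Cadd (Cmul X c) be))) Yv)))))
                   (Cmul (Cmul X X) (Cmul (Cmul (Cmul m L) L) (Cmul E Yv)))))
       (Cmul (Cmul B (Cmul X (Cmul X X))) (Cmul (Cmul (Cmul L L) L) (Cmul E Yv))) = C0.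
Proof.
  rewrite C3, C2. intros K1 K2 K3 K4.
  assert (Hi : Cmul (Copp Ci) (Copp Ci) = Copp C1) by (unfold Cmul, Copp, Ci, C1; simpl; f_equal; ring).
  simpl Cpown.
  transitivity (Cmul (Cmul E Yv)
    (Cadd (Cadd (Cadd (Cmul (Cmul X (Cmul X X)) (Csub (Cmul m (Cmul c (Cmul c (Cmul c (Cmul c c))))) (Cmul B (Cmul L (Cmul L L)))))
                      (Cmul (Cmul (Cmul X X) m) (Csub (Cmul (Cadd C1 (Cadd C1 C1)) (Cmul (Cmul c (Cmul c (Cmul c c))) be)) (Cmul L L))))
                (Cmul (Cadd (Cmul m (Cmul c (Cmul c (Cmul c X)))) (Cmul m (Cmul c (Cmul c be)))) (Cadd z (Cmul (Cadd C1 (Cadd C1 C1)) (Cmul be be)))))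
          (Cmul m (Csub (Cmul m m) (Cmul (Cadd C1 C1) (Cmul (Cmul c c) (Cmul be (Cmul be be)))))))).
  - replace (Cmul (Cmul (Cmul m (Copp Ci)) (Copp Ci)) (Cmul E (Cmul c (Cmul c
      (Cmul (Cadd (Cmul (Cadd (Cmul X c) be) (Cmul (Cadd (Cmul X c) be) (Cmul (Cadd (Cmul X c) be) C1)))
                  (Cmul z (Cadd (Cmul X c) be))) Yv)))))
    with (Cmul (Cmul (Copp Ci) (Copp Ci)) (Cmul m (Cmul E (Cmul c (Cmul c
      (Cmul (Cadd (Cmul (Cadd (Cmul X c) be) (Cmul (Cadd (Cmul X c) be) (Cmul (Cadd (Cmul X c) be) C1)))
                  (Cmul z (Cadd (Cmul X c) be))) Yv)))))) by ring.
    rewrite Hi. ring.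
  - rewrite K1, K2, K3, K4. ring.
Qed.


Lemma b0_pos : 0 < b0.
Proof.
  unfold b0. apply Rdiv_lt_0_compat. apply sqrt_lt_R0; lra.
  apply Rmult_lt_0_compat; [lra | apply sqrt_lt_R0; lra].
Qed.
Lemma b0_sq : b0 * b0 = 2 / 27.
Proof.
  unfold b0. assert (0 < sqrt 3) by (apply sqrt_lt_R0; lra).
  replace (sqrt 2 / (3 * sqrt 3) * (sqrt 2 / (3 * sqrt 3))) with
    ((sqrt 2 * sqrt 2) / (9 * (sqrt 3 * sqrt 3))) by (field; lra).
  rewrite !sqrt_sqrt by lra. field.
Qed.

Lemma rpow_k5 x k : 0 < x -> Rpower x (INR k / 5) = (Rpower x (1/5)) ^ k.
Proof.
  intro. rewrite <- Rpower_pow by apply Rpower_pos. rewrite Rpower_mult. f_equal. field.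
Qed.
Lemma rpow_5 x : 0 < x -> (Rpower x (1/5)) ^ 5 = x.
Proof.
  intro. rewrite <- rpow_k5 by auto. replace (INR 5 / 5) with 1 by (simpl; field). apply Rpower_1; auto.
Qed.

Lemma Csub_RtoC_eq x y : x = y -> Csub (RtoC x) (RtoC y) = C0.
Proof. intro; subst. ring. Qed.

Lemma Cexp_frac k t : Cexp (0, INR k * (t / 5)) = Cpown (Cexp (0, t / 5)) k.
Proof. rewrite Cexp_i_pown. reflexivity. Qed.

Lemma Cnorm_Cinvomega_pow k : Cnorm (Cpown Cinvomega k) = 1.
Proof. rewrite Cnorm_pown. unfold Cinvomega. rewrite Cnorm_Cexp_i. apply pow1. Qed.

Lemma Cmul_C1_l z : Cmul C1 z = z. Proof. ring. Qed.


Lemma decays (Y Yp : Cx -> Cx -> Cx) (B Cc : nat -> list Cx) z0 ct th a b :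
  0 < th <= PI / 6 -> 0 < a -> 0 < b ->
  (forall y z, Cderiv (fun w => Y w z) y (Yp y z)) ->
  (forall y z, exists L, Cderiv (fun w => Yp w z) y L) ->
  asympt Y (- (3/4)) C1 B -> asympt Yp (3/4) (Copp C1) Cc ->
  (forall y, Y y z0 = Cmul ct (Y (Cmul (Cpown Cinvomega 2) y) (Cmul (Cpown Cinvomega 4) z0))) ->
  Decay (fun s => Y s z0) (Cmul (RtoC a) (Cexp (0, - (th / 5)))) (Cmul (RtoC b) (Cexp (0, 4 * th / 5))) /\
  Decay (fun s => Yp s z0) (Cmul (RtoC a) (Cexp (0, - (th / 5)))) (Cmul (RtoC b) (Cexp (0, 4 * th / 5))).
Proof.
  intros Hth Ha Hb HD1 HD2 HB HC Hrel.
  set (q := Cpown Cinvomega 2). set (q4 := Cpown Cinvomega 4).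
  assert (Hq : Cnorm q = 1) by apply Cnorm_Cinvomega_pow.
  assert (Hq4 : Cnorm (Cmul q4 z0) = Cnorm z0) by (rewrite Cnorm_mul; unfold q4; rewrite Cnorm_Cinvomega_pow; ring).
  assert (Hq0 : q <> C0) by (intro E; rewrite E, Cnorm_C0 in Hq; lra).
  assert (Hrel' : forall y, Yp y z0 = Cmul ct (Cmul q (Yp (Cmul q y) (Cmul q4 z0)))).
  { intro y. apply (Cderiv_unique (fun w => Y w z0) y). apply HD1.
    eapply Cderiv_ext; [intro w; symmetry; apply Hrel |].
    apply Cderiv_scale. apply (Cderiv_lin (fun w => Y w (Cmul q4 z0))); auto. }
  pose proof (kap_pos th Hth) as Hk.
  assert (Hp1 : Rabs (- (3/4)) <= 1) by (rewrite Rabs_left; lra).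
  assert (Hp2 : Rabs (3/4) <= 1) by (rewrite Rabs_right; lra).
  assert (HPI : 0 < PI / 5) by (pose proof PIpos; lra).
  split; apply decay_assemble; auto.
  - intro s. exists (Yp s z0). apply HD1.
  - intro N. destruct (far_bound Y _ _ _ (PI/5) (Cnorm z0) (kap th) N HB HPI Hp1 Hk) as [M [y1 H]].
    exists M, y1. intros y Hs Hy Hc. apply H; auto. lra.
  - intro N. destruct (far_bound Y _ _ _ (PI/5) (Cnorm z0) (kap th) N HB HPI Hp1 Hk) as [M [y1 H]].
    exists (Cnorm ct * M), y1. intros y Hs Hy Hc. rewrite Hrel, Cnorm_mul.
    specialize (H (Cmul q y) (Cmul q4 z0) Hs).
    rewrite Cnorm_mul, Hq, Rmult_1_l in H. specialize (H Hy ltac:(lra) Hc).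
    pose proof (Cnorm_ge0 ct). unfold q, q4 in *.
    nra.
  - intro N. destruct (far_bound Yp _ _ _ (PI/5) (Cnorm z0) (kap th) N HC HPI Hp2 Hk) as [M [y1 H]].
    exists M, y1. intros y Hs Hy Hc. apply H; auto. lra.
  - intro N. destruct (far_bound Yp _ _ _ (PI/5) (Cnorm z0) (kap th) N HC HPI Hp2 Hk) as [M [y1 H]].
    exists (Cnorm ct * M), y1. intros y Hs Hy Hc. rewrite Hrel', !Cnorm_mul, Hq.
    specialize (H (Cmul q y) (Cmul q4 z0) Hs).
    rewrite Cnorm_mul, Hq, Rmult_1_l in H. specialize (H Hy ltac:(lra) Hc).
    pose proof (Cnorm_ge0 ct). unfold q, q4 in *.
    nra.
Qed.


Theorem mainTheorem8 (n : nat) (Hn : (2 <= n)%nat)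
  (Y : Cx -> Cx -> Cx) (HY : IsSibuya Y)
  (zeta0 : Cx) (Hzero : StokesC0 Y zeta0 C0)
  (Harg : arg_in zeta0 PI (19 * PI / 15)) :
  exists R0 th0 : R, 0 < R0 /\ 0 < th0 <= PI / 6 /\
    Cmul (RtoC (- (1/3) * Rpower b0 (- (8/5)) * Rpower R0 (8/5)))
         (Cexp (0, 8 * th0 / 5)) = zeta0 /\
    let alpha := Cmul (RtoC (Rpower b0 (1/5) * Rpower R0 (- (1/5))))
                      (Cexp (0, - (th0 / 5))) in
    let beta := Cmul (RtoC ((1/3) * Rpower b0 (- (4/5)) * Rpower R0 (4/5)))
                     (Cexp (0, 4 * th0 / 5)) in
    let arg1 := fun (lam x1 : R) => Cadd (Cmul (RtoC (sqrt lam * x1)) alpha) beta in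
    (forall lam : R, 0 < lam ->
       P_annihilates n (fun x : nat -> R =>
         Cmul (Cexp (Cadd (Cmul Ci (Cmul (RtoC (x 0%nat * sqrt lam * R0)) (Cexp (0, th0))))
                          (Cmul Ci (RtoC (x n * lam)))))
              (Y (arg1 lam (x 1%nat)) zeta0))) /\
    (forall lam : R, 0 < lam -> InSchwartz (fun x1 => Y (arg1 lam x1) zeta0)) /\
    (exists Mb : R, forall lam x1 : R, 0 < lam -> Cnorm (Y (arg1 lam x1) zeta0) <= Mb).
Proof.
  destruct HY as [_ [Yp [Ypp [HD1 [HD2 [HODE [[B HB] [Cc HCc]]]]]]]].
  destruct Hzero as [ct Hct].
  assert (Hrel : forall y, Y y zeta0 = Cmul ct (Y (Cmul (Cpown Cinvomega 2) y) (Cmul (Cpown Cinvomega 4) zeta0))).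
  { intro y. assert (E0 : Yk Y 0 y zeta0 = Y y zeta0).
    { unfold Yk. change (Cpown Cinvomega 0) with C1. change (Cpown Cinvomega (2*0)) with C1.
      rewrite !Cmul_C1_l. reflexivity. }
    rewrite <- E0, Hct.
    change (Yk Y 2 y zeta0) with (Y (Cmul (Cpown Cinvomega 2) y) (Cmul (Cpown Cinvomega 4) zeta0)). ring. }
  destruct Harg as [Hz0 [th [[Hth1 Hth2] Ez]]].
  pose proof PIpos as HPI.
  set (Z := Cnorm zeta0) in *.
  assert (HZ : 0 < Z) by (apply Cnorm_pos_ne; auto).
  set (th0 := 5 * (th - PI) / 8).
  pose proof b0_pos as Hb0.
  set (X := 3 * Z * Rpower b0 (8/5)).
  assert (HX : 0 < X) by (unfold X; pose proof (Rpower_pos b0 (8/5)); nra).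
  set (R0 := Rpower X (5/8)).
  exists R0, th0.
  assert (HR0 : 0 < R0) by apply Rpower_pos.
  assert (Hth0 : 0 < th0 <= PI / 6) by (unfold th0; lra).
  assert (HR08 : Rpower R0 (8/5) = X).
  { unfold R0. rewrite Rpower_mult. replace (5/8 * (8/5)) with 1 by field. apply Rpower_1; auto. }
  set (Zc := - (1/3) * Rpower b0 (- (8/5)) * Rpower R0 (8/5)).
  assert (Hzeta : Cmul (RtoC Zc) (Cexp (0, 8 * th0 / 5)) = zeta0).
  { unfold Zc. rewrite HR08, Rpower_Ropp.
    replace (- (1/3) * / Rpower b0 (8/5) * X) with (- Z)
      by (unfold X; pose proof (Rpower_pos b0 (8/5)); field; lra).
    replace (8 * th0 / 5) with (th + - PI) by (unfold th0; field). rewrite Cexp_i_add.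
    assert (Em : Cexp (0, - PI) = Copp C1).
    { unfold Cexp, Copp, C1; simpl. rewrite exp_0, cos_neg, sin_neg, cos_PI, sin_PI. f_equal; ring. }
    rewrite Em. rewrite Ez. rewrite RtoC_opp. ring. }
  split; [exact HR0|]. split; [exact Hth0|]. split; [exact Hzeta|].
  intros alpha beta arg1.
  set (p := Rpower b0 (1/5)). set (qq := Rpower R0 (1/5)).
  assert (Hp : 0 < p) by apply Rpower_pos. assert (Hqq : 0 < qq) by apply Rpower_pos.
  assert (p5 : p ^ 5 = b0) by (apply rpow_5; auto).
  assert (q5 : qq ^ 5 = R0) by (apply rpow_5; auto).
  assert (Hp10 : p ^ 10 = 2 / 27).
  { rewrite <- b0_sq, <- p5. ring. }
  assert (Rk : forall x k, 0 < x -> Rpower x (- (INR k / 5)) = / (Rpower x (1/5)) ^ k).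
  { intros x k Hx. rewrite Rpower_Ropp, rpow_k5; auto. }
  set (a := Rpower b0 (1/5) * Rpower R0 (- (1/5))).
  set (b := (1/3) * Rpower b0 (- (4/5)) * Rpower R0 (4/5)).
  assert (Ea : a = p * / qq).
  { unfold a. fold p. replace (- (1/5)) with (- (INR 1 / 5)) by (simpl; field).
    rewrite Rk; auto. fold qq. rewrite pow_1. reflexivity. }
  assert (Eb : b = 1/3 * / p ^ 4 * qq ^ 4).
  { unfold b. replace (4/5) with (INR 4 / 5) by (simpl; field).
    rewrite Rk, rpow_k5; auto. }
  assert (EZc : Zc = - (1/3) * / p ^ 8 * qq ^ 8).
  { unfold Zc. replace (8/5) with (INR 8 / 5) by (simpl; field).
    rewrite Rk, rpow_k5; auto. }
  assert (Ha : 0 < a) by (rewrite Ea; apply Rmult_lt_0_compat; [lra | apply Rinv_0_lt_compat; lra]).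
  assert (Hb : 0 < b).
  { rewrite Eb. apply Rmult_lt_0_compat; [apply Rmult_lt_0_compat; [lra | apply Rinv_0_lt_compat, pow_lt; lra] | apply pow_lt; lra]. }
  assert (HD2' : forall y z, exists L, Cderiv (fun w => Yp w z) y L).
  { intros y z. exists (Ypp y z). apply HD2. }
  destruct (decays Y Yp B Cc zeta0 ct th0 a b Hth0 Ha Hb HD1 HD2' HB HCc Hrel) as [DG DH].
  fold alpha beta in DG, DH.
  split; [| split].
  - intros lam Hlam.
    set (sl := sqrt lam).
    assert (Hsl : sl * sl = lam) by (apply sqrt_sqrt; lra).
    assert (Hsl0 : 0 < sl) by (apply sqrt_lt_R0; lra).
    set (c := Cmul (RtoC sl) alpha).
    set (gY := fun t => Y (ell c beta t) zeta0).
    set (gY1 := fun t => Cmul c (Yp (ell c beta t) zeta0)).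
    set (gY2 := fun t => Cmul c (Cmul c (Ypp (ell c beta t) zeta0))).
    assert (HgY : forall t, RCderiv gY t (gY1 t)).
    { intro t. apply (RC_chain (fun w => Y w zeta0) c beta t). apply HD1. }
    assert (HgY1 : forall t, RCderiv gY1 t (gY2 t)).
    { intro t. apply RC_scale. apply (RC_chain (fun w => Yp w zeta0) c beta t). apply HD2. }
    set (m := mu sl R0 th0).
    set (L := RtoC lam).
    set (W' := W sl R0 th0 lam n).
    exists (W' (Cmul C1 m) gY), (W' (Cmul (Cmul C1 m) m) gY), (W' (Cmul (Cmul (Cmul C1 m) m) m) gY),
           (W' (Cmul (Cmul C1 m) (Copp Ci)) gY1), (W' (Cmul (Cmul (Cmul C1 m) (Copp Ci)) (Copp Ci)) gY2),
           (W' (Cmul (Cmul C1 m) L) gY), (W' (Cmul (Cmul (Cmul C1 m) L) L) gY),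
           (W' (Cmul C1 L) gY), (W' (Cmul (Cmul C1 L) L) gY), (W' (Cmul (Cmul (Cmul C1 L) L) L) gY).
    split; [| split; [| split; [| split; [| split; [| split; [| split; [| split; [| split; [| split]]]]]]]]].
    + eapply HasD_ext; [| intro x; reflexivity | apply (D0 sl R0 th0 lam n Hn C1 gY)].
      intro x. unfold W', W, Ef. rewrite Cmul_C1_l. f_equal. unfold gY, arg1, ell, c.
      f_equal. unfold sl. rewrite RtoC_mul. ring.
    + apply D0; auto.
    + apply D0; auto.
    + apply D1; auto.
    + apply D1; auto.
    + apply Dn; auto.
    + apply Dn; auto.
    + eapply HasD_ext; [| intro x; reflexivity | apply (Dn sl R0 th0 lam n Hn C1 gY)].
      intro x. unfold W', W, Ef. rewrite Cmul_C1_l. f_equal. unfold gY, arg1, ell, c.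
      f_equal. unfold sl. rewrite RtoC_mul. ring.
    + apply Dn; auto.
    + apply Dn; auto.
    + intro x.
      set (u := Cexp (0, th0 / 5)). set (v := Cexp (0, - (th0 / 5))).
      assert (Huv : Cmul u v = C1) by apply Cexp_i_inv.
      assert (Ealpha : alpha = Cmul (RtoC a) v) by reflexivity.
      assert (Ebeta : beta = Cmul (RtoC b) (Cpown u 4)).
      { unfold beta. fold b. f_equal. unfold u. rewrite <- Cexp_frac. f_equal. f_equal. simpl; field. }
      assert (Em : m = Cmul (RtoC (sl * R0)) (Cpown u 5)).
      { unfold m, mu. f_equal. unfold u. rewrite <- Cexp_frac. f_equal. f_equal. simpl; field. }
      assert (Ez0 : zeta0 = Cmul (RtoC Zc) (Cpown u 8)).
      { rewrite <- Hzeta. f_equal. unfold u. rewrite <- Cexp_frac. f_equal. f_equal. simpl; field. }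
      assert (Ec : c = Cmul (RtoC (sl * a)) v).
      { unfold c. rewrite Ealpha, RtoC_mul. ring. }
      assert (K1 : Csub (Cmul m (Cmul c (Cmul c (Cmul c (Cmul c c))))) (Cmul (RtoC b0) (Cmul L (Cmul L L))) = C0).
      { rewrite Em, Ec.
        transitivity (Csub (Cmul (RtoC (sl * R0 * (sl * a) ^ 5)) (Cpown (Cmul u v) 5)) (RtoC (b0 * lam ^ 3))).
        { unfold L. repeat (rewrite RtoC_mul || rewrite RtoC_pow || rewrite RtoC_add). simpl Cpown. ring. }
        rewrite Huv.
        transitivity (Csub (RtoC (sl * R0 * (sl * a) ^ 5)) (RtoC (b0 * lam ^ 3))).
        { simpl Cpown. ring. }
        apply Csub_RtoC_eq. rewrite Ea, <- Hsl, <- q5, <- p5. field. lra. }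
      assert (K2 : Csub (Cmul (RtoC 3) (Cmul (Cmul c (Cmul c (Cmul c c))) beta)) (Cmul L L) = C0).
      { rewrite Ec, Ebeta.
        transitivity (Csub (Cmul (RtoC (3 * ((sl * a) ^ 4 * b))) (Cpown (Cmul u v) 4)) (RtoC (lam * lam))).
        { unfold L. repeat (rewrite RtoC_mul || rewrite RtoC_pow || rewrite RtoC_add). simpl Cpown. ring. }
        rewrite Huv.
        transitivity (Csub (RtoC (3 * ((sl * a) ^ 4 * b))) (RtoC (lam * lam))).
        { simpl Cpown. ring. }
        apply Csub_RtoC_eq. rewrite Ea, Eb, <- Hsl. field. lra. }
      assert (K3 : Cadd zeta0 (Cmul (RtoC 3) (Cmul beta beta)) = C0).
      { rewrite Ez0, Ebeta.
        transitivity (Cmul (RtoC (Zc + 3 * (b * b))) (Cpown u 8)).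
        { repeat (rewrite RtoC_mul || rewrite RtoC_pow || rewrite RtoC_add). simpl Cpown. ring. }
        replace (Zc + 3 * (b * b)) with 0 by (rewrite EZc, Eb; field; lra).
        rewrite RtoC_0. ring. }
      assert (K4 : Csub (Cmul m m) (Cmul (RtoC 2) (Cmul (Cmul c c) (Cmul beta (Cmul beta beta)))) = C0).
      { rewrite Em, Ec, Ebeta.
        transitivity (Cmul (Cpown u 10) (Csub (RtoC ((sl * R0) ^ 2)) (Cmul (RtoC (2 * ((sl * a) ^ 2 * b ^ 3))) (Cpown (Cmul u v) 2)))).
        { repeat (rewrite RtoC_mul || rewrite RtoC_pow || rewrite RtoC_add). simpl Cpown. ring. }
        rewrite Huv.
        transitivity (Cmul (Cpown u 10) (Csub (RtoC ((sl * R0) ^ 2)) (RtoC (2 * ((sl * a) ^ 2 * b ^ 3))))).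
        { simpl Cpown. ring. }
        rewrite Csub_RtoC_eq. ring.
        rewrite Ea, Eb, <- q5. symmetry.
        transitivity (sl ^ 2 * qq ^ 10 * (2 / (27 * p ^ 10))). field; lra.
        rewrite Hp10. field. }
      unfold W', W, gY, gY2. rewrite HODE.
      set (X1 := RtoC (x 1%nat)).
      replace (RtoC (x 1%nat ^ 2)) with (Cmul X1 X1) by (unfold X1; rewrite RtoC_pow; simpl; ring).
      replace (RtoC (b0 * x 1%nat ^ 3)) with (Cmul (RtoC b0) (Cmul X1 (Cmul X1 X1)))
        by (unfold X1; rewrite RtoC_mul, RtoC_pow; simpl; ring).
      set (E := Ef sl R0 th0 lam n x).
      set (Yv := Y (ell c beta (x 1%nat)) zeta0).
      etransitivity; [| apply (pde_alg m c beta zeta0 L (RtoC b0) X1 E Yv K1 K2 K3 K4)].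
      unfold ell. fold X1. ring.
  - intros lam Hlam.
    apply (schwartz_generic (fun s => Y s zeta0) (fun s => Yp s zeta0) zeta0 alpha beta lam); auto.
    + intro s. rewrite <- HODE. apply HD2.
    + intro E. assert (Cnorm alpha = a) by (unfold alpha; fold a; rewrite Cnorm_mul, Cnorm_RtoC, Cnorm_Cexp_i, Rabs_right; lra).
      rewrite E, Cnorm_C0 in H. lra.
  - destruct (DG 0%nat) as [M HM]. exists M. intros lam x1 _.
    specialize (HM (sqrt lam * x1)). simpl pow in HM. rewrite Rmult_1_l in HM. exact HM.
Qed.
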